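(* Let $m>0$. There is a unique $R^*>m/2$ satisfying $$\log\sqrt{\frac{2R^*}{m}}=\frac{2R^*+m}{2R^*-m},$$ and the annular domain $\Sigma_0(R)=\Sigma_0\cap\{|x|\le R\}$ of the plane through the origin is stable (i.e. $Q(u,u)\ge 0$ for every smooth $u$ on $\Sigma_0(R)$ vanishing on $\{|x|=R\}$) if and only if $m/2<R\le R^*$; that is, $\Sigma_0(R^* )$ is the maximal annular domain of stability containing the horizon. (Numerically $R^*\approx 5.5\,m$.)
   Context: For $m>0$ let $M=\{x\in\mathbb R^3: |x|\ge m/2\}$ with metric $g=(1+\frac{m}{2|x|})^4\delta$, $\delta$ the Euclidean metric, and $\Sigma_0=\{x\in M:x_3=0\}$; $|x|$ denotes the Euclidean norm. For smooth $u$ on $\Sigma_0(R)$, since $\Sigma_0$ and $\partial M$ are totally geodesic, the second variation of $g$-area for variations tangential along $\partial M$ is $Q(u,u)=\int_{\Sigma_0(R)}\big(|\nabla_g u|_g^2-\mathrm{Ric}_g(N,N)u^2\big)dA_g$, with $N$ a unit normal to $\Sigma_0$. *)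

(* Defs.v *)
From Stdlib Require Import Reals Lra ClassicalEpsilon.
Open Scope R_scope.

(** Points of R^3 are functions nat -> R; only coordinates 0,1,2 are used
    (coordinate 2 is x_3). *)
Definition pt := nat -> R.

Definition shift (x : pt) (i : nat) (t : R) : pt :=
  fun k => if Nat.eqb k i then x k + t else x k.

(** Partial derivative d/dx_i of f at x (value of the derivative when it
    exists; an arbitrary value otherwise -- only used where it exists). *)
Definition pd (i : nat) (f : pt -> R) (x : pt) : R :=
  epsilon (inhabits 0)
    (fun l => derivable_pt_lim (fun t => f (shift x i t)) 0 l).

Definition sum3 (f : nat -> R) : R := f 0%nat + f 1%nat + f 2%nat.

Definition norm3 (x : pt) : R := sqrt (x 0%nat ^ 2 + x 1%nat ^ 2 + x 2%nat ^ 2).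

Definition phi (m : R) (x : pt) : R := 1 + m / (2 * norm3 x).

Definition gmet (m : R) (i j : nat) (x : pt) : R :=
  if Nat.eqb i j then phi m x ^ 4 else 0.

Definition cof3 (A : nat -> nat -> R) (i j : nat) : R :=
  let i1 := Nat.modulo (i + 1) 3 in let i2 := Nat.modulo (i + 2) 3 in
  let j1 := Nat.modulo (j + 1) 3 in let j2 := Nat.modulo (j + 2) 3 in
  A i1 j1 * A i2 j2 - A i1 j2 * A i2 j1.
Definition det3 (A : nat -> nat -> R) : R := sum3 (fun j => A 0%nat j * cof3 A 0%nat j).
Definition inv3 (A : nat -> nat -> R) (i j : nat) : R := cof3 A j i / det3 A.

Definition ginv (m : R) (i j : nat) (x : pt) : R := inv3 (fun a b => gmet m a b x) i j.

Definition Gamma (m : R) (i j k : nat) (x : pt) : R :=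
  / 2 * sum3 (fun l => ginv m i l x *
     (pd j (gmet m l k) x + pd k (gmet m l j) x - pd l (gmet m j k) x)).

Definition Ric (m : R) (j k : nat) (x : pt) : R :=
  sum3 (fun i => pd i (Gamma m i j k) x - pd k (Gamma m i i j) x
     + sum3 (fun p => Gamma m i i p x * Gamma m p j k x
                      - Gamma m i k p x * Gamma m p i j x)).

(** g-unit normal N to the plane {x_3 = 0}: N^j = g^{j3} / sqrt(g^{33}). *)
Definition Nvec (m : R) (x : pt) (j : nat) : R := ginv m j 2%nat x / sqrt (ginv m 2%nat 2%nat x).

Definition RicNN (m : R) (x : pt) : R :=
  sum3 (fun j => sum3 (fun k => Ric m j k x * Nvec m x j * Nvec m x k)).

Definition emb (x y : R) : pt :=
  fun k => match k with 0%nat => x | 1%nat => y | _ => 0 end.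

Definition hmet (m : R) (a b : nat) (x y : R) : R := gmet m a b (emb x y).
Definition det2 (A : nat -> nat -> R) : R := A 0%nat 0%nat * A 1%nat 1%nat - A 0%nat 1%nat * A 1%nat 0%nat.
Definition inv2 (A : nat -> nat -> R) (a b : nat) : R :=
  (match a, b with
   | 0%nat, 0%nat => A 1%nat 1%nat
   | 1%nat, 1%nat => A 0%nat 0%nat
   | 0%nat, 1%nat => - A 0%nat 1%nat
   | _, _ => - A 1%nat 0%nat end) / det2 A.
Definition sum2 (f : nat -> R) : R := f 0%nat + f 1%nat.

Definition pdu (a : nat) (u : R -> R -> R) (x y : R) : R :=
  pd a (fun p => u (p 0%nat) (p 1%nat)) (emb x y).

Definition gradnorm2 (m : R) (u : R -> R -> R) (x y : R) : R :=
  sum2 (fun a => sum2 (fun b =>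
    inv2 (fun c d => hmet m c d x y) a b * pdu a u x y * pdu b u x y)).
Definition areadens (m : R) (x y : R) : R := sqrt (det2 (fun c d => hmet m c d x y)).

(** Riemann integral on [a,b] (value when f is Riemann integrable). *)
Definition Rint (a b : R) (f : R -> R) : R :=
  epsilon (inhabits 0) (fun l => exists pr : Riemann_integrable f a b, RiemannInt pr = l).

(** Integral over the annulus Sigma_0(R) = {m/2 <= |x| <= R, x_3 = 0} w.r.t.
    Lebesgue measure dx1 dx2, computed in polar coordinates. *)
Definition annulus_int (m Rad : R) (F : R -> R -> R) : R :=
  Rint (m / 2) Rad (fun r => Rint 0 (2 * PI) (fun t => F (r * cos t) (r * sin t)) * r).

Definition Qform (m Rad : R) (u : R -> R -> R) : R :=
  annulus_int m Rad (fun x y =>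
    (gradnorm2 m u x y - RicNN m (emb x y) * u x y ^ 2) * areadens m x y).

Definition cont2 (f : R -> R -> R) : Prop :=
  forall x y eps, 0 < eps -> exists d, 0 < d /\
    forall x' y', (x' - x) ^ 2 + (y' - y) ^ 2 < d ^ 2 -> Rabs (f x' y' - f x y) < eps.

Fixpoint Cn (n : nat) (f : R -> R -> R) : Prop :=
  match n with
  | O => cont2 f
  | S k => cont2 f /\ exists fx fy : R -> R -> R,
      (forall x y, derivable_pt_lim (fun t => f t y) x (fx x y)) /\
      (forall x y, derivable_pt_lim (fun t => f x t) y (fy x y)) /\
      Cn k fx /\ Cn k fy
  end.

Definition smooth2 (f : R -> R -> R) : Prop := forall n, Cn n f.

Definition stable (m Rad : R) : Prop :=
  forall u : R -> R -> R, smooth2 u ->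
    (forall x y, x ^ 2 + y ^ 2 = Rad ^ 2 -> u x y = 0) ->
    0 <= Qform m Rad u.

Definition Rstar_eq (m Rs : R) : Prop :=
  ln (sqrt (2 * Rs / m)) = (2 * Rs + m) / (2 * Rs - m).

(* Main.v *)
Require Import Defs.
From Stdlib Require Import Reals Lra Lia ClassicalEpsilon FunctionalExtensionality.
From Coquelicot Require Import Coquelicot.
Open Scope R_scope.

Lemma pd_spec i f x l : derivable_pt_lim (fun t => f (shift x i t)) 0 l -> pd i f x = l.
Proof.
  intro H. unfold pd.
  pose proof (epsilon_spec (inhabits 0) (fun l => derivable_pt_lim (fun t => f (shift x i t)) 0 l) (ex_intro _ l H)) as H'.
  eapply uniqueness_limite; eauto.
Qed.

Lemma dlim_ext_loc f g x l (d:R) : 0<d -> (forall t, Rabs (t - x) < d -> f t = g t) ->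
  derivable_pt_lim f x l -> derivable_pt_lim g x l.
Proof.
  intros Hd Heq H eps Heps. destruct (H eps Heps) as [del Hdel].
  assert (Hm : 0 < Rmin del d) by (apply Rmin_pos; [apply cond_pos|lra]).
  exists (mkposreal _ Hm). intros h Hh Hhd. simpl in Hhd.
  rewrite <- !Heq. apply Hdel; auto. eapply Rlt_le_trans; [apply Hhd|apply Rmin_l].
  rewrite Rminus_diag, Rabs_R0; lra.
  replace (x + h - x) with h by ring. eapply Rlt_le_trans; [apply Hhd|apply Rmin_r].
Qed.

Lemma shift_eval x i t k : shift x i t k = x k + (if Nat.eqb k i then t else 0).
Proof. unfold shift. destruct (Nat.eqb k i); ring. Qed.

Definition sq3 (x:pt) := x 0%nat ^ 2 + x 1%nat ^ 2 + x 2%nat ^ 2.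

Lemma norm3_pos_sq x : 0 < norm3 x -> 0 < sq3 x.
Proof.
  unfold norm3, sq3. intro H. destruct (Rlt_le_dec 0 (x 0%nat ^ 2 + x 1%nat ^ 2 + x 2%nat ^ 2)); auto.
  rewrite sqrt_neg_0 in H; lra.
Qed.

Lemma sq3_shift x i t : (i < 3)%nat -> sq3 (shift x i t) = sq3 x + 2 * x i * t + t ^ 2.
Proof.
  intro Hi. unfold sq3. rewrite !shift_eval.
  destruct i as [|[|[|i]]]; simpl; try lia; ring.
Qed.

Lemma dN x i : (i < 3)%nat -> 0 < norm3 x ->
  derivable_pt_lim (fun t => norm3 (shift x i t)) 0 (x i / norm3 x).
Proof.
  intros Hi HN. pose proof (norm3_pos_sq x HN) as Hs.
  assert (E : forall t, norm3 (shift x i t) = sqrt (sq3 x + 2 * x i * t + t ^ 2)).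
  { intro t. rewrite <- sq3_shift by auto. reflexivity. }
  apply (dlim_ext_loc (fun t => sqrt (sq3 x + 2 * x i * t + t ^ 2)) _ _ _ 1); [lra| intros; symmetry; apply E |].
  apply is_derive_Reals. auto_derive.
  - lra.
  - unfold norm3. fold (sq3 x). replace (sq3 x + 2 * x i * 0 + 0 * (0 * 1)) with (sq3 x) by ring. field. apply Rgt_not_eq. apply sqrt_lt_R0. lra.
Qed.

Lemma dN_comp x i F F' : (i < 3)%nat -> 0 < norm3 x -> derivable_pt_lim F (norm3 x) F' ->
  derivable_pt_lim (fun t => F (norm3 (shift x i t))) 0 (F' * (x i / norm3 x)).
Proof.
  intros Hi HN HF.
  assert (E: norm3 (shift x i 0) = norm3 x).
  { f_equal. apply functional_extensionality. intro k. rewrite shift_eval. destruct (Nat.eqb k i); ring. }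
  apply (derivable_pt_lim_comp (fun t => norm3 (shift x i t)) F). apply dN; auto.
  rewrite E. auto.
Qed.

Definition dlt (i j : nat) : R := if Nat.eqb i j then 1 else 0.

Lemma phi_pos m x : 0 < m -> 0 < norm3 x -> 0 < phi m x.
Proof. intros. unfold phi. assert (0 < m / (2 * norm3 x)) by (apply Rdiv_lt_0_compat; lra). lra. Qed.

Definition dg (m:R) (x:pt) (j:nat) : R :=
  4 * phi m x ^ 3 * (- m / (2 * norm3 x ^ 2)) * (x j / norm3 x).

Lemma pd_gmet m x l k j : 0 < m -> (j < 3)%nat -> 0 < norm3 x ->
  pd j (gmet m l k) x = dlt l k * dg m x j.
Proof.
  intros Hm Hj HN. unfold dlt. destruct (Nat.eqb l k) eqn:E.
  - apply pd_spec.
    apply (dlim_ext_loc (fun t => (fun r => (1 + m / (2 * r)) ^ 4) (norm3 (shift x j t))) _ _ _ 1); [lra| |].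
    + intros t _. unfold gmet. rewrite E. reflexivity.
    + unfold dg. replace (1 * _) with ((4 * phi m x ^ 3 * (- m / (2 * norm3 x ^ 2))) * (x j / norm3 x)) by ring.
      apply (dN_comp x j (fun r => (1 + m / (2 * r)) ^ 4)); auto. apply is_derive_Reals. auto_derive. lra.
      unfold phi. field. lra.
  - apply pd_spec. replace (0 * dg m x j) with 0 by ring.
    apply (dlim_ext_loc (fun _ => 0) _ _ _ 1); [lra| |].
    + intros t _. unfold gmet. rewrite E. reflexivity.
    + apply derivable_pt_lim_const.
Qed.

Lemma ginv_eq m x i l : 0 < m -> 0 < norm3 x -> (i < 3)%nat -> (l < 3)%nat ->
  ginv m i l x = dlt i l / phi m x ^ 4.
Proof.
  intros Hm HN Hi Hl. pose proof (phi_pos m x Hm HN).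
  unfold ginv, inv3, cof3, det3, sum3, gmet, dlt.
  destruct i as [|[|[|i]]]; try lia; destruct l as [|[|[|l]]]; try lia; simpl; unfold cof3; simpl; field; lra.
Qed.

Definition aa (m:R) (l:nat) (x:pt) : R := - m * x l / (norm3 x ^ 2 * (norm3 x + m / 2)).

Definition GE m i j k x := dlt i j * aa m k x + dlt i k * aa m j x - dlt j k * aa m i x.

Lemma Gamma_eq m i j k x : 0 < m -> 0 < norm3 x -> (i < 3)%nat -> (j < 3)%nat -> (k < 3)%nat ->
  Gamma m i j k x = GE m i j k x.
Proof.
  intros Hm HN Hi Hj Hk. pose proof (phi_pos m x Hm HN).
  unfold Gamma, sum3.
  rewrite !ginv_eq by (auto; lia).
  rewrite !pd_gmet by (auto; lia).
  unfold GE, aa, dg, phi, dlt.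
  destruct i as [|[|[|i]]]; try lia; destruct j as [|[|[|j]]]; try lia;
  destruct k as [|[|[|k]]]; try lia; simpl; unfold phi in *; field; lra.
Qed.

Definition gg (m r : R) := / (r ^ 2 * (r + m / 2)).
Definition dgg (m r : R) := - (3 * r ^ 2 + m * r) / (r ^ 2 * (r + m / 2)) ^ 2.
Definition da m l j x := - m * (dlt l j * gg m (norm3 x) + x l * (dgg m (norm3 x) * (x j / norm3 x))).

Lemma norm3_shift_pos x d t : (d < 3)%nat -> 0 < norm3 x -> Rabs t < norm3 x -> 0 < norm3 (shift x d t).
Proof.
  intros Hd HN Ht. unfold norm3. fold (sq3 (shift x d t)). rewrite sq3_shift by auto.
  apply sqrt_lt_R0. pose proof (norm3_pos_sq x HN) as Hs.
  assert (Hn2 : norm3 x ^ 2 = sq3 x) by (unfold norm3; rewrite pow2_sqrt; [reflexivity| unfold sq3 in *; lra]).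
  assert (Hxd : x d ^ 2 <= sq3 x) by (unfold sq3; destruct d as [|[|[|d]]]; try lia; nra).
  assert (Ht2 : t ^ 2 < sq3 x).
  { rewrite <- Hn2, <- (pow2_abs t). pose proof (Rabs_pos t). nra. }
  destruct (Req_dec (x d + t) 0) as [H0|H0].
  - replace t with (- x d) by lra. nra.
  - assert (0 < (x d + t)^2) by (apply pow2_gt_0; auto). nra.
Qed.

Lemma shift0 x i : shift x i 0 = x.
Proof. apply functional_extensionality. intro k. rewrite shift_eval. destruct (Nat.eqb k i); ring. Qed.

Lemma d_gg m r : 0 < m -> 0 < r -> derivable_pt_lim (gg m) r (dgg m r).
Proof.
  intros Hm Hr. unfold gg, dgg. apply is_derive_Reals. auto_derive.
  - apply Rgt_not_eq. apply Rmult_gt_0_compat; [nra|lra].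
  - field. split; lra.
Qed.

Lemma d_aa m l j x : 0 < m -> (l < 3)%nat -> (j < 3)%nat -> 0 < norm3 x ->
  derivable_pt_lim (fun t => aa m l (shift x j t)) 0 (da m l j x).
Proof.
  intros Hm Hl Hj HN.
  assert (E : forall t, aa m l (shift x j t) = (- m * (x l + dlt l j * t)) * gg m (norm3 (shift x j t))).
  { intro t. unfold aa, gg, dlt. rewrite shift_eval. destruct (Nat.eqb l j); unfold Rdiv; ring. }
  apply (dlim_ext_loc (fun t => (- m * (x l + dlt l j * t)) * gg m (norm3 (shift x j t))) _ _ _ 1); [lra| intros; symmetry; apply E|].
  replace (da m l j x) with ((- m * dlt l j) * gg m (norm3 (shift x j 0)) + (- m * (x l + dlt l j * 0)) * (dgg m (norm3 x) * (x j / norm3 x))).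
  2:{ rewrite shift0. unfold da. ring. }
  apply (derivable_pt_lim_mult (fun t => - m * (x l + dlt l j * t)) (fun t => gg m (norm3 (shift x j t)))).
  - apply is_derive_Reals. auto_derive; auto. ring.
  - apply (dN_comp x j (gg m)); auto. apply d_gg; auto.
Qed.

Definition dGE m i j k d x := dlt i j * da m k d x + dlt i k * da m j d x - dlt j k * da m i d x.

Lemma pd_Gamma m i j k d x : 0 < m -> 0 < norm3 x -> (i < 3)%nat -> (j < 3)%nat -> (k < 3)%nat -> (d < 3)%nat ->
  pd d (Gamma m i j k) x = dGE m i j k d x.
Proof.
  intros Hm HN Hi Hj Hk Hd. apply pd_spec.
  apply (dlim_ext_loc (fun t => GE m i j k (shift x d t)) _ _ _ (norm3 x)); [lra| |].
  - intros t Ht. rewrite Rminus_0_r in Ht. symmetry. apply Gamma_eq; auto. apply norm3_shift_pos; auto.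
  - unfold GE, dGE.
    apply derivable_pt_lim_minus; [apply derivable_pt_lim_plus|];
    apply (derivable_pt_lim_scal (fun t => aa m _ (shift x d t))); apply d_aa; auto.
Qed.

Lemma norm3_emb x y : norm3 (emb x y) = sqrt (x ^ 2 + y ^ 2).
Proof. unfold norm3, emb. simpl. f_equal. ring. Qed.

Lemma Ric22 m x y : 0 < m -> 0 < x ^ 2 + y ^ 2 ->
  Ric m 2 2 (emb x y) = m / (sqrt (x^2+y^2) * (sqrt (x^2+y^2) + m / 2) ^ 2).
Proof.
  intros Hm Hxy.
  rewrite <- norm3_emb.
  assert (HN : 0 < norm3 (emb x y)) by (rewrite norm3_emb; apply sqrt_lt_R0; auto).
  assert (Hr : norm3 (emb x y) ^ 2 = x ^ 2 + y ^ 2) by (rewrite norm3_emb; apply pow2_sqrt; lra).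
  unfold Ric, sum3.
  rewrite !pd_Gamma by (auto; lia).
  rewrite !Gamma_eq by (auto; lia).
  unfold dGE, GE, da, aa, dlt, gg, dgg.
  set (r := norm3 (emb x y)) in *.
  unfold emb. simpl.
  assert (r <> 0) by lra. assert (r + m/2 <> 0) by lra.
  field_simplify; try lra.
  replace (y^2) with (r^2 - x^2) by lra.
  assert (0 < m ^ 2 * r + 4 * m * r ^ 2 + 4 * r ^ 3) by (apply Rplus_lt_0_compat; [apply Rplus_lt_0_compat|]; repeat apply Rmult_lt_0_compat; try apply pow_lt; lra).
  assert (0 < m ^ 2 * r ^ 5 + 4 * m * r ^ 6 + 4 * r ^ 7) by (apply Rplus_lt_0_compat; [apply Rplus_lt_0_compat|]; repeat apply Rmult_lt_0_compat; try apply pow_lt; lra).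
  field. lra.
Qed.

Definition Vp (m r : R) := m / (r * (r + m / 2) ^ 2).

Lemma integrand_eq m u x y : 0 < m -> 0 < x ^ 2 + y ^ 2 ->
  (gradnorm2 m u x y - RicNN m (emb x y) * u x y ^ 2) * areadens m x y =
  pdu 0 u x y ^ 2 + pdu 1 u x y ^ 2 - Vp m (sqrt (x^2+y^2)) * u x y ^ 2.
Proof.
  intros Hm Hxy.
  assert (HN : 0 < norm3 (emb x y)) by (rewrite norm3_emb; apply sqrt_lt_R0; auto).
  pose proof (phi_pos m (emb x y) Hm HN) as Hp.
  set (p := phi m (emb x y)) in *.
  assert (Ha : areadens m x y = p ^ 4).
  { unfold areadens, det2, hmet, gmet. simpl. fold p.
    replace (p * (p * (p * (p * 1))) * (p * (p * (p * (p * 1)))) - 0 * 0) with ((p^4)^2) by ring.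
    rewrite sqrt_pow2; [ring| apply pow_le; lra]. }
  assert (Hg : gradnorm2 m u x y = (pdu 0 u x y ^ 2 + pdu 1 u x y ^ 2) / p ^ 4).
  { unfold gradnorm2, sum2, inv2, det2, hmet, gmet. simpl. fold p. field. lra. }
  assert (Hs : sqrt (ginv m 2 2 (emb x y)) = / p ^ 2).
  { rewrite ginv_eq by (auto; lia). unfold dlt. simpl. fold p.
    replace (1 / (p * (p * (p * (p * 1))))) with ((/ p ^ 2) ^ 2) by (field; lra).
    rewrite sqrt_pow2; [reflexivity|]. apply Rlt_le, Rinv_0_lt_compat. simpl; nra. }
  assert (Hric : RicNN m (emb x y) = Ric m 2 2 (emb x y) / p ^ 4).
  { unfold RicNN, sum3, Nvec. rewrite Hs. rewrite !ginv_eq by (auto; lia). unfold dlt. simpl. fold p.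
    field. lra. }
  rewrite Ha, Hg, Hric, Ric22 by auto. unfold Vp.
  assert (0 < sqrt (x^2+y^2)) by (apply sqrt_lt_R0; auto).
  field. repeat split; try lra.
Qed.

Lemma Rint_eq a b f g : a <= b -> ex_RInt g a b -> (forall x, a <= x <= b -> f x = g x) ->
  Rint a b f = RInt g a b.
Proof.
  intros Hab Hg Hfg. pose proof (ex_RInt_Reals_0 _ _ _ Hg) as prg.
  assert (prf : Riemann_integrable f a b).
  { apply (Riemann_integrable_ext g). intros x Hx. symmetry. apply Hfg.
    rewrite Rmin_left, Rmax_right in Hx by lra. auto. auto. }
  unfold Rint.
  destruct (epsilon_spec (inhabits 0) (fun l => exists pr : Riemann_integrable f a b, RiemannInt pr = l)
     (ex_intro _ _ (ex_intro _ prf eq_refl))) as [pr Hpr].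
  rewrite <- Hpr. rewrite (RInt_Reals g a b prg). apply RiemannInt_P18; auto.
  intros x Hx. apply Hfg. lra.
Qed.

Lemma deriv_shift0 f x l : derivable_pt_lim f x l -> derivable_pt_lim (fun t => f (x + t)) 0 l.
Proof.
  intros H eps Heps. destruct (H eps Heps) as [d Hd]. exists d. intros h Hh Hhd.
  rewrite Rplus_0_l, Rplus_0_r. apply Hd; auto.
Qed.


Lemma pd_spec' i f x l : derivable_pt_lim (fun t => f (shift x i t)) 0 l -> pd i f x = l.
Proof.
  intro H. unfold pd.
  pose proof (epsilon_spec (inhabits 0) (fun l => derivable_pt_lim (fun t => f (shift x i t)) 0 l) (ex_intro _ l H)) as H'.
  eapply uniqueness_limite; eauto.
Qed.

Lemma pdu0_eq u fx x y : (forall x y, derivable_pt_lim (fun t => u t y) x (fx x y)) -> pdu 0 u x y = fx x y.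
Proof.
  intro H. unfold pdu. apply pd_spec'. unfold shift, emb. simpl.
  apply (deriv_shift0 (fun t => u t y)). auto.
Qed.

Lemma pdu1_eq u fy x y : (forall x y, derivable_pt_lim (fun t => u x t) y (fy x y)) -> pdu 1 u x y = fy x y.
Proof.
  intro H. unfold pdu. apply pd_spec'. unfold shift, emb. simpl.
  apply (deriv_shift0 (fun t => u x t)). auto.
Qed.

Lemma c2d_of_cont2 f x y : cont2 f -> continuity_2d_pt f x y.
Proof.
  intros Hf eps. destruct (Hf x y eps (cond_pos eps)) as [d [Hd Hdd]].
  assert (Hd2 : 0 < d / 2) by lra.
  exists (mkposreal _ Hd2). simpl. intros u v Hu Hv. apply Hdd.
  apply Rabs_def2 in Hu. apply Rabs_def2 in Hv.
  assert (0 < (d/2 - (u-x)) * (d/2 + (u-x))) by (apply Rmult_lt_0_compat; lra).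
  assert (0 < (d/2 - (v-y)) * (d/2 + (v-y))) by (apply Rmult_lt_0_compat; lra).
  simpl. nra.
Qed.

Lemma cont2_of_c2d f : (forall x y, continuity_2d_pt f x y) -> cont2 f.
Proof.
  intros Hf x y eps Heps. destruct (Hf x y (mkposreal eps Heps)) as [d Hd].
  exists d. split; [apply cond_pos|]. intros x' y' H. pose proof (cond_pos d) as Hd0. apply Hd.
  - rewrite <- (Rabs_pos_eq d) by lra. apply Rsqr_lt_abs_0. unfold Rsqr.
    pose proof (pow2_ge_0 (y'-y)). simpl in *. lra.
  - rewrite <- (Rabs_pos_eq d) by lra. apply Rsqr_lt_abs_0. unfold Rsqr.
    pose proof (pow2_ge_0 (x'-x)). simpl in *. lra.
Qed.

Lemma c2d_comp f g1 g2 r t : continuity_2d_pt f (g1 r t) (g2 r t) -> continuity_2d_pt g1 r t ->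
  continuity_2d_pt g2 r t -> continuity_2d_pt (fun r t => f (g1 r t) (g2 r t)) r t.
Proof.
  intros Hf H1 H2 eps. destruct (Hf eps) as [d1 Hd1]. destruct (H1 d1) as [a Ha]. destruct (H2 d1) as [b Hb].
  assert (Hm : 0 < Rmin a b) by (apply Rmin_pos; apply cond_pos).
  exists (mkposreal _ Hm). simpl. intros u v Hu Hv. apply Hd1.
  - apply Ha; eapply Rlt_le_trans; eauto; [apply Rmin_l|apply Rmin_l].
  - apply Hb; eapply Rlt_le_trans; eauto; [apply Rmin_r|apply Rmin_r].
Qed.

Lemma c2d_rcos r t : continuity_2d_pt (fun r t => r * cos t) r t.
Proof.
  apply continuity_2d_pt_mult. apply continuity_2d_pt_id1.
  apply (continuity_1d_2d_pt_comp cos (fun _ v => v)). apply derivable_continuous_pt, derivable_pt_cos.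
  apply continuity_2d_pt_id2.
Qed.

Lemma c2d_rsin r t : continuity_2d_pt (fun r t => r * sin t) r t.
Proof.
  apply continuity_2d_pt_mult. apply continuity_2d_pt_id1.
  apply (continuity_1d_2d_pt_comp sin (fun _ v => v)). apply derivable_continuous_pt, derivable_pt_sin.
  apply continuity_2d_pt_id2.
Qed.

Lemma c2d_polar f r t : continuity_2d_pt f (r * cos t) (r * sin t) ->
  continuity_2d_pt (fun r t => f (r * cos t) (r * sin t)) r t.
Proof.
  intro H. apply (c2d_comp f (fun r t => r * cos t) (fun r t => r * sin t)); auto.
  apply c2d_rcos. apply c2d_rsin.
Qed.

Lemma mvt_abs g g' p q : (forall c, derivable_pt_lim g c (g' c)) ->
  exists xi, Rabs (xi - p) <= Rabs (q - p) /\ g q - g p = g' xi * (q - p).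
Proof.
  intro H. destruct (Rtotal_order p q) as [Hl|[He|Hg]].
  - destruct (MVT_cor2 g g' p q Hl (fun c _ => H c)) as [c [Hc1 Hc2]].
    exists c. split; auto. rewrite !Rabs_right by lra. lra.
  - subst. exists q. split; [rewrite Rminus_diag, Rabs_R0; lra| ring].
  - destruct (MVT_cor2 g g' q p Hg (fun c _ => H c)) as [c [Hc1 Hc2]].
    exists c. split. rewrite !Rabs_left by lra. lra. lra.
Qed.

Lemma dir_deriv u fx fy x y a b :
  (forall x y, derivable_pt_lim (fun t => u t y) x (fx x y)) ->
  (forall x y, derivable_pt_lim (fun t => u x t) y (fy x y)) ->
  continuity_2d_pt fx x y ->
  derivable_pt_lim (fun h => u (x + h * a) (y + h * b)) 0 (a * fx x y + b * fy x y).
Proof.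
  intros Hx Hy Cfx eps Heps.
  set (A := Rabs a + Rabs b + 1).
  assert (HA : 1 <= A) by (unfold A; pose proof (Rabs_pos a); pose proof (Rabs_pos b); lra).
  set (e := eps / (2 * A)).
  assert (He : 0 < e) by (unfold e; apply Rdiv_lt_0_compat; lra).
  destruct (Cfx (mkposreal e He)) as [d1 Hd1].
  destruct (Hy x y e He) as [d2 Hd2].
  assert (Hd : 0 < Rmin d1 d2 / A) by (apply Rdiv_lt_0_compat; [apply Rmin_pos; apply cond_pos|lra]).
  exists (mkposreal _ Hd). simpl. intros h Hh0 Hh.
  assert (Hha : Rabs (h * a) < d1 /\ Rabs (h * a) < d2).
  { rewrite Rabs_mult. assert (Rabs h * A < Rmin d1 d2).
    { apply (Rmult_lt_compat_r A) in Hh; [|lra]. unfold Rdiv in Hh. rewrite Rmult_assoc, Rinv_l in Hh; lra. }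
    pose proof (Rmin_l d1 d2). pose proof (Rmin_r d1 d2). pose proof (Rabs_pos h).
    unfold A in *. pose proof (Rabs_pos b). split; nra. }
  assert (Hhb : Rabs (h * b) < d1 /\ Rabs (h * b) < d2).
  { rewrite Rabs_mult. assert (Rabs h * A < Rmin d1 d2).
    { apply (Rmult_lt_compat_r A) in Hh; [|lra]. unfold Rdiv in Hh. rewrite Rmult_assoc, Rinv_l in Hh; lra. }
    pose proof (Rmin_l d1 d2). pose proof (Rmin_r d1 d2). pose proof (Rabs_pos h).
    unfold A in *. pose proof (Rabs_pos a). split; nra. }
  rewrite !Rplus_0_l, !Rmult_0_l, !Rplus_0_r.
  destruct (mvt_abs (fun t => u t (y + h * b)) (fun t => fx t (y + h * b)) x (x + h * a) (fun c => Hx c _)) as [xi [Hxi1 Hxi2]].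
  replace (x + h * a - x) with (h * a) in * by ring.
  assert (T1 : Rabs (fx xi (y + h * b) - fx x y) < e).
  { apply Hd1. lra. replace (y + h * b - y) with (h * b) by ring. tauto. }
  assert (T2 : Rabs ((u x (y + h * b) - u x y) / h - b * fy x y) <= Rabs b * e).
  { destruct (Req_dec b 0) as [Hb0|Hb0].
    - subst b. rewrite Rmult_0_r, Rplus_0_r, Rminus_diag. unfold Rdiv. rewrite Rmult_0_l, Rmult_0_l, Rminus_0_r, Rabs_R0. lra.
    - assert (Hk : h * b <> 0) by (apply Rmult_integral_contrapositive; auto).
      pose proof (Hd2 (h * b) Hk ltac:(tauto)) as Hk2.
      replace ((u x (y + h * b) - u x y) / h - b * fy x y) with (b * ((u x (y + h * b) - u x y) / (h * b) - fy x y)) by (field; auto).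
      rewrite Rabs_mult. apply Rmult_le_compat_l; [apply Rabs_pos| lra]. }
  replace ((u (x + h * a) (y + h * b) - u x y) / h - (a * fx x y + b * fy x y))
    with (a * (fx xi (y + h * b) - fx x y) + ((u x (y + h * b) - u x y) / h - b * fy x y)).
  2:{ replace (u (x + h * a) (y + h * b)) with (u x (y + h * b) + fx xi (y + h * b) * (h * a)) by lra. field. auto. }
  eapply Rle_lt_trans; [apply Rabs_triang|]. rewrite Rabs_mult.
  assert (Rabs a * Rabs (fx xi (y + h * b) - fx x y) <= Rabs a * e) by (apply Rmult_le_compat_l; [apply Rabs_pos|lra]).
  assert ((Rabs a + Rabs b) * e < eps).
  { unfold e. replace ((Rabs a + Rabs b) * (eps / (2 * A))) with (eps * ((Rabs a + Rabs b) / (2 * A))) by (field; lra).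
    assert ((Rabs a + Rabs b) / (2 * A) < 1).
    { apply (Rmult_lt_reg_r (2 * A)); [lra|]. unfold Rdiv. rewrite Rmult_assoc, Rinv_l by lra.
      unfold A. pose proof (Rabs_pos a). pose proof (Rabs_pos b). lra. }
    assert (0 <= (Rabs a + Rabs b) / (2 * A)) by (apply Rdiv_le_0_compat; [pose proof (Rabs_pos a); pose proof (Rabs_pos b); lra|lra]).
    nra. }
  nra.
Qed.

Lemma c2d_snd f x y : continuity_2d_pt f x y -> continuity_pt (f x) y.
Proof.
  intros H eps Heps. destruct (H (mkposreal eps Heps)) as [d Hd].
  exists d. split; [apply cond_pos|]. intros z [_ Hz]. simpl in *. unfold R_dist in *.
  apply Hd; auto. rewrite Rminus_diag, Rabs_R0. apply cond_pos.
Qed.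

Lemma cont_of_c2d_snd f x y : continuity_2d_pt f x y -> continuous (f x) y.
Proof. intro H. apply continuity_pt_filterlim. apply c2d_snd. auto. Qed.

Lemma ex_RInt_c2d f x c d : (forall t, Rmin c d <= t <= Rmax c d -> continuity_2d_pt f x t) -> ex_RInt (f x) c d.
Proof. intro H. apply (@ex_RInt_continuous R_CompleteNormedModule). intros z Hz. apply cont_of_c2d_snd. auto. Qed.

Lemma RInt_param_cont G c d r : c <= d ->
  (forall t, c <= t <= d -> continuity_2d_pt G r t) ->
  (exists del, 0 < del /\ forall v, Rabs (v - r) < del -> ex_RInt (G v) c d) ->
  continuity_pt (fun v => RInt (G v) c d) r.
Proof.
  intros Hcd HG [del0 [Hdel0 Hex]] eps Heps.
  set (e := eps / (d - c + 1)).
  assert (He : 0 < e) by (unfold e; apply Rdiv_lt_0_compat; lra).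
  destruct (uniform_continuity_2d_1d' G c d r HG (mkposreal e He)) as [del Hdel].
  assert (Hm : 0 < Rmin del del0) by (apply Rmin_pos; [apply cond_pos|lra]).
  exists (Rmin del del0). split; auto. intros v [_ Hv]. simpl in *. unfold R_dist in *.
  assert (Hv1 : Rabs (v - r) < del) by (eapply Rlt_le_trans; [apply Hv|apply Rmin_l]).
  assert (Hv2 : Rabs (v - r) < del0) by (eapply Rlt_le_trans; [apply Hv|apply Rmin_r]).
  assert (Er : ex_RInt (G r) c d) by (apply Hex; rewrite Rminus_diag, Rabs_R0; lra).
  assert (Ev : ex_RInt (G v) c d) by auto.
  assert (E : RInt (G v) c d - RInt (G r) c d = RInt (fun t => G v t - G r t) c d).
  { rewrite (RInt_minus (G v) (G r)) by auto. reflexivity. }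
  rewrite E.
  eapply Rle_lt_trans.
  apply (abs_RInt_le_const _ c d e); auto.
  - apply (ex_RInt_minus (G v) (G r)); auto.
  - intros t Ht. apply Rlt_le. apply Rabs_def2 in Hv1.
    apply (Hdel t r t v); auto; try lra. rewrite Rminus_diag, Rabs_R0. apply cond_pos.
  - unfold e. replace ((d - c) * (eps / (d - c + 1))) with (eps * ((d - c) / (d - c + 1))) by (field; lra).
    assert ((d - c) / (d - c + 1) < 1).
    { apply (Rmult_lt_reg_r (d - c + 1)); [lra|]. unfold Rdiv. rewrite Rmult_assoc, Rinv_l; lra. }
    assert (0 <= (d - c) / (d - c + 1)) by (apply Rdiv_le_0_compat; lra).
    nra.
Qed.

Ltac sc := repeat split; try lra; try (apply Rgt_not_eq; nra); try (apply Rlt_not_eq; nra); auto.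

Definition Nw (s : R) := 4 + (s - 1) * (2 - ln s).
Definition Wf (s : R) := Nw s / (s + 1).
Definition dWf (s : R) := - (2 * ln s + (s * s - 1) / s) / (s + 1) ^ 2.
Definition psi (s : R) := ln s - 2 - 4 / (s - 1).

Lemma dWf_spec s : 0 < s -> derivable_pt_lim Wf s (dWf s).
Proof.
  intro Hs. unfold Wf, Nw, dWf. apply is_derive_Reals. auto_derive.
  - repeat split; lra || auto.
  - field. lra.
Qed.

Lemma sdWf_spec s : 0 < s -> derivable_pt_lim (fun s => s * dWf s) s (- 2 * Wf s / (s + 1) ^ 2).
Proof.
  intro Hs. unfold Wf, Nw, dWf. apply is_derive_Reals. auto_derive.
  - sc.
  - field. sc.
Qed.

Lemma dWf_1 : dWf 1 = 0.
Proof. unfold dWf. rewrite ln_1. field. Qed.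

Lemma Wf_1 : Wf 1 = 2.
Proof. unfold Wf, Nw. rewrite ln_1. field. Qed.

Lemma ln_pos s : 1 < s -> 0 < ln s.
Proof. intro. rewrite <- ln_1. apply ln_increasing; lra. Qed.

Lemma dWf_neg s : 1 < s -> dWf s < 0.
Proof.
  intro Hs. unfold dWf. pose proof (ln_pos s Hs).
  assert (0 < (s * s - 1) / s) by (apply Rdiv_lt_0_compat; nra).
  assert (0 < (s+1)^2) by (apply pow_lt; lra).
  assert (0 < (2 * ln s + (s * s - 1) / s) / (s+1)^2) by (apply Rdiv_lt_0_compat; lra).
  replace (- (2 * ln s + (s * s - 1) / s) / (s + 1) ^ 2) with (- ((2 * ln s + (s * s - 1) / s) / (s+1)^2)) by (unfold Rdiv; ring).
  lra.
Qed.

Lemma psi_incr a b : 1 < a -> a < b -> psi a < psi b.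
Proof.
  intros Ha Hab. unfold psi. pose proof (ln_increasing a b ltac:(lra) Hab).
  assert (4 / (b - 1) < 4 / (a - 1)).
  { unfold Rdiv. apply Rmult_lt_compat_l; [lra|]. apply Rinv_lt_contravar; nra. }
  lra.
Qed.

Lemma Nw_psi s : 1 < s -> Nw s = - (s - 1) * psi s.
Proof. intro. unfold Nw, psi. field. lra. Qed.

Lemma ln_2_lt_1 : ln 2 < 1.
Proof.
  rewrite <- (ln_exp 1). apply ln_increasing; [lra|].
  pose proof (exp_ineq1 1 ltac:(lra)). lra.
Qed.

Lemma psi_root : { s | 1 < s /\ psi s = 0 }.
Proof.
  assert (He : 5 < exp 4) by (pose proof (exp_ineq1 4 ltac:(lra)); lra).
  destruct (Ranalysis5.IVT_interv psi 2 (exp 4)) as [z [Hz1 Hz2]].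
  - intros a Ha. apply derivable_continuous_pt. unfold psi.
    apply derivable_pt_minus; [apply derivable_pt_minus|].
    + exists (/a). apply derivable_pt_lim_ln. lra.
    + apply derivable_pt_const.
    + apply derivable_pt_div. apply derivable_pt_const.
      apply derivable_pt_minus; [apply derivable_pt_id|apply derivable_pt_const].
      lra.
  - lra.
  - unfold psi. pose proof ln_2_lt_1. assert (4 / (2 - 1) = 4) by field. lra.
  - unfold psi. rewrite ln_exp. assert (4 / (exp 4 - 1) < 1).
    { apply (Rmult_lt_reg_r (exp 4 - 1)); [lra|]. unfold Rdiv. rewrite Rmult_assoc, Rinv_l; lra. }
    lra.
  - exists z. split; [lra|auto].
Qed.

Definition sstar : R := proj1_sig psi_root.

Lemma sstar_gt1 : 1 < sstar.
Proof. unfold sstar. destruct psi_root as [s [H1 H2]]. simpl. auto. Qed.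

Lemma psi_sstar : psi sstar = 0.
Proof. unfold sstar. destruct psi_root as [s [H1 H2]]. simpl. auto. Qed.

Lemma psi_root_unique s : 1 < s -> psi s = 0 -> s = sstar.
Proof.
  intros Hs Hp. pose proof sstar_gt1 as G1. pose proof psi_sstar as G2.
  destruct (Rtotal_order s sstar) as [H|[H|H]]; auto.
  - pose proof (psi_incr s sstar Hs H). lra.
  - pose proof (psi_incr sstar s ltac:(lra) H). lra.
Qed.

Lemma Wf_pos s : 1 <= s -> s < sstar -> 0 < Wf s.
Proof.
  intros H1 H2. unfold Wf. apply Rdiv_lt_0_compat; [|lra].
  destruct (Req_dec s 1) as [->|Hne].
  - unfold Nw. rewrite ln_1. lra.
  - rewrite Nw_psi by lra. pose proof (psi_incr s sstar ltac:(lra) H2). rewrite psi_sstar in H.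
    nra.
Qed.

Lemma Wf_sstar : Wf sstar = 0.
Proof. unfold Wf. rewrite Nw_psi by (apply sstar_gt1). rewrite psi_sstar. unfold Rdiv. ring. Qed.

Lemma Wf_neg s : sstar < s -> Wf s < 0.
Proof.
  intros H. pose proof sstar_gt1. unfold Wf. unfold Rdiv.
  apply Rmult_neg_pos; [|apply Rinv_0_lt_compat; lra].
  rewrite Nw_psi by lra. pose proof (psi_incr sstar s ltac:(lra) H). rewrite psi_sstar in H1. nra.
Qed.

Lemma ln_sqrt' x : 0 < x -> ln (sqrt x) = ln x / 2.
Proof.
  intro Hx. assert (Hs : 0 < sqrt x) by (apply sqrt_lt_R0; auto).
  assert (ln x = ln (sqrt x) + ln (sqrt x)).
  { rewrite <- ln_mult by auto. rewrite sqrt_sqrt; lra. }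
  lra.
Qed.

Lemma Rstar_eq_psi m Rs : 0 < m -> m / 2 < Rs -> (Rstar_eq m Rs <-> psi (2 * Rs / m) = 0).
Proof.
  intros Hm HR. unfold Rstar_eq. assert (Hs : 1 < 2 * Rs / m).
  { apply (Rmult_lt_reg_r m); auto. unfold Rdiv. rewrite Rmult_assoc, Rinv_l; lra. }
  rewrite ln_sqrt' by lra.
  assert (E : (2 * Rs + m) / (2 * Rs - m) = (2 * Rs / m + 1) / (2 * Rs / m - 1)) by (field; lra).
  rewrite E. unfold psi.
  assert (E2 : 4 / (2 * Rs / m - 1) = 2 * ((2 * Rs / m + 1) / (2 * Rs / m - 1)) - 2) by (field; lra).
  rewrite E2. split; intro; lra.
Qed.

Definition Pp (u : R -> R -> R) r t := u (r * cos t) (r * sin t).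
Definition Gi m (u fx fy : R -> R -> R) r t :=
  Pp fx r t ^ 2 + Pp fy r t ^ 2 - Vp m r * Pp u r t ^ 2.
Definition hfun m u fx fy r := RInt (Gi m u fx fy r) 0 (2 * PI) * r.

Definition Cdata (u fx fy : R -> R -> R) :=
  (forall x y, derivable_pt_lim (fun t => u t y) x (fx x y)) /\
  (forall x y, derivable_pt_lim (fun t => u x t) y (fy x y)) /\
  (forall x y, continuity_2d_pt u x y) /\
  (forall x y, continuity_2d_pt fx x y) /\
  (forall x y, continuity_2d_pt fy x y).

Lemma cont_of_is_derive f x l : is_derive f x l -> continuity_pt f x.
Proof. intro H. apply derivable_continuous_pt. exists l. apply is_derive_Reals; auto. Qed.

Lemma Vp_cont m r : 0 < m -> 0 < r -> continuity_pt (Vp m) r.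
Proof.
  intros Hm Hr. eapply cont_of_is_derive. unfold Vp. auto_derive.
  - apply Rgt_not_eq. apply Rmult_lt_0_compat; auto. nra.
  - reflexivity.
Qed.

Lemma c2d_pow2 f x y : continuity_2d_pt f x y -> continuity_2d_pt (fun x y => f x y ^ 2) x y.
Proof.
  intro H. apply (continuity_2d_pt_ext (fun x y => f x y * f x y)). intros; ring.
  apply continuity_2d_pt_mult; auto.
Qed.

Lemma Gi_c2d m u fx fy r t : 0 < m -> 0 < r -> Cdata u fx fy -> continuity_2d_pt (Gi m u fx fy) r t.
Proof.
  intros Hm Hr [_ [_ [Cu [Cx Cy]]]]. unfold Gi, Pp.
  apply continuity_2d_pt_minus; [apply continuity_2d_pt_plus|apply continuity_2d_pt_mult].
  - apply c2d_pow2. apply (c2d_polar fx). auto.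
  - apply c2d_pow2. apply (c2d_polar fy). auto.
  - apply (continuity_1d_2d_pt_comp (Vp m) (fun r _ => r)). apply Vp_cont; auto. apply continuity_2d_pt_id1.
  - apply c2d_pow2. apply (c2d_polar u). auto.
Qed.

Lemma RInt_Gi_cont m u fx fy r : 0 < m -> 0 < r -> Cdata u fx fy ->
  continuity_pt (fun v => RInt (Gi m u fx fy v) 0 (2 * PI)) r.
Proof.
  intros Hm Hr HC. pose proof PI_RGT_0.
  apply RInt_param_cont. lra.
  - intros. apply Gi_c2d; auto.
  - exists r. split; auto. intros v Hv. apply ex_RInt_c2d. intros. apply Gi_c2d; auto.
    apply Rabs_def2 in Hv. lra.
Qed.

Lemma hfun_cont m u fx fy r : 0 < m -> 0 < r -> Cdata u fx fy -> continuity_pt (hfun m u fx fy) r.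
Proof.
  intros. unfold hfun. apply continuity_pt_mult. apply RInt_Gi_cont; auto. apply derivable_continuous_pt, derivable_pt_id.
Qed.

Lemma ex_RInt_hfun m u fx fy a b : 0 < m -> 0 < a -> a <= b -> Cdata u fx fy -> ex_RInt (hfun m u fx fy) a b.
Proof.
  intros. apply (@ex_RInt_continuous R_CompleteNormedModule). intros z Hz.
  apply continuity_pt_filterlim. apply hfun_cont; auto.
  rewrite Rmin_left in Hz by lra. lra.
Qed.

Lemma polar_sq r t : (r * cos t) ^ 2 + (r * sin t) ^ 2 = r ^ 2.
Proof. pose proof (sin2_cos2 t). unfold Rsqr in H. replace (r^2) with (r^2 * 1) by ring. rewrite <- H. ring. Qed.

Lemma Q_eq m Rad u fx fy : 0 < m -> m / 2 <= Rad -> Cdata u fx fy ->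
  Qform m Rad u = RInt (hfun m u fx fy) (m / 2) Rad.
Proof.
  intros Hm HR HC. pose proof PI_RGT_0. destruct HC as [Hx [Hy [Cu [Cx Cy]]]] eqn:HCe.
  unfold Qform, annulus_int. apply Rint_eq; auto.
  - apply ex_RInt_hfun; auto; lra.
  - intros r Hr. unfold hfun. f_equal. apply Rint_eq; [lra| |].
    + apply ex_RInt_c2d. intros. apply Gi_c2d; auto. lra.
    + intros t Ht. rewrite integrand_eq; auto.
      * rewrite (pdu0_eq u fx) by auto. rewrite (pdu1_eq u fy) by auto.
        rewrite polar_sq. rewrite sqrt_pow2 by lra. unfold Gi, Pp. reflexivity.
      * rewrite polar_sq. apply pow_lt. lra.
Qed.

Definition Pr (fx fy : R -> R -> R) r t := cos t * Pp fx r t + sin t * Pp fy r t.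

Lemma deriv_unshift f x l : derivable_pt_lim (fun h => f (x + h)) 0 l -> derivable_pt_lim f x l.
Proof.
  intros H eps Heps. destruct (H eps Heps) as [d Hd]. exists d. intros h Hh Hhd.
  pose proof (Hd h Hh Hhd) as K. rewrite Rplus_0_l, Rplus_0_r in K. auto.
Qed.

Lemma Pp_deriv u fx fy r t : Cdata u fx fy ->
  derivable_pt_lim (fun z => Pp u z t) r (Pr fx fy r t).
Proof.
  intros [Hx [Hy [Cu [Cx Cy]]]]. apply deriv_unshift.
  pose proof (dir_deriv u fx fy (r * cos t) (r * sin t) (cos t) (sin t) Hx Hy (Cx _ _)) as K.
  unfold Pr, Pp.
  apply (dlim_ext_loc (fun h => u (r * cos t + h * cos t) (r * sin t + h * sin t)) _ _ _ 1); [lra| |auto].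
  intros. f_equal; ring.
Qed.

Lemma Pr_c2d u fx fy r t : Cdata u fx fy -> continuity_2d_pt (Pr fx fy) r t.
Proof.
  intros [Hx [Hy [Cu [Cx Cy]]]]. unfold Pr.
  apply continuity_2d_pt_plus; apply continuity_2d_pt_mult.
  - apply (continuity_1d_2d_pt_comp cos (fun _ v => v)). apply derivable_continuous_pt, derivable_pt_cos. apply continuity_2d_pt_id2.
  - apply (c2d_polar fx). auto.
  - apply (continuity_1d_2d_pt_comp sin (fun _ v => v)). apply derivable_continuous_pt, derivable_pt_sin. apply continuity_2d_pt_id2.
  - apply (c2d_polar fy). auto.
Qed.

Lemma Pp_c2d u r t : (forall x y, continuity_2d_pt u x y) -> continuity_2d_pt (Pp u) r t.
Proof. intro Cu. apply (c2d_polar u). auto. Qed.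

Definition Jf u r := RInt (fun t => Pp u r t ^ 2) 0 (2 * PI).
Definition dJf u fx fy r := RInt (fun t => 2 * Pp u r t * Pr fx fy r t) 0 (2 * PI).

Lemma Jf_deriv u fx fy r : Cdata u fx fy -> is_derive (Jf u) r (dJf u fx fy r).
Proof.
  intro HC. pose proof HC as [Hx [Hy [Cu [Cx Cy]]]]. pose proof PI_RGT_0.
  assert (D : forall z t, is_derive (fun z => Pp u z t ^ 2) z (2 * Pp u z t * Pr fx fy z t)).
  { intros z t. apply is_derive_Reals.
    replace (2 * Pp u z t * Pr fx fy z t) with ((INR 2 * Pp u z t ^ Init.Nat.pred 2) * Pr fx fy z t) by (simpl; ring).
    apply (derivable_pt_lim_comp (fun z => Pp u z t) (fun y => y ^ 2)). apply Pp_deriv; auto.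
    apply derivable_pt_lim_pow. }
  unfold Jf, dJf.
  assert (E : RInt (fun t => 2 * Pp u r t * Pr fx fy r t) 0 (2 * PI) = RInt (fun t => Derive (fun z => Pp u z t ^ 2) r) 0 (2 * PI)).
  { apply RInt_ext. intros. symmetry. apply is_derive_unique. apply D. }
  rewrite E.
  apply (is_derive_RInt_param (fun z t => Pp u z t ^ 2)).
  - exists (mkposreal 1 Rlt_0_1). intros. eexists. apply D.
  - intros t Ht. apply (continuity_2d_pt_ext (fun a b => 2 * Pp u a b * Pr fx fy a b)).
    + intros. symmetry. apply is_derive_unique. apply D.
    + apply continuity_2d_pt_mult; [apply continuity_2d_pt_mult|].
      apply continuity_2d_pt_const. apply Pp_c2d; auto. apply (Pr_c2d u); auto.
  - exists (mkposreal 1 Rlt_0_1). intros. apply (ex_RInt_c2d (fun a b => Pp u a b ^ 2)). intros. apply c2d_pow2. apply Pp_c2d. auto.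
Qed.

Lemma ex_RInt_P2 u r : (forall x y, continuity_2d_pt u x y) -> ex_RInt (fun t => Pp u r t ^ 2) 0 (2 * PI).
Proof. intros. apply (ex_RInt_c2d (fun a b => Pp u a b ^ 2)). intros. apply c2d_pow2. apply Pp_c2d. auto. Qed.

Lemma ex_RInt_PPr u fx fy r : Cdata u fx fy -> ex_RInt (fun t => 2 * Pp u r t * Pr fx fy r t) 0 (2 * PI).
Proof.
  intros HC. pose proof HC as [Hx [Hy [Cu [Cx Cy]]]]. apply (ex_RInt_c2d (fun a b => 2 * Pp u a b * Pr fx fy a b)). intros.
  apply (continuity_2d_pt_mult (fun a b => 2 * Pp u a b) (Pr fx fy)). apply continuity_2d_pt_mult.
  apply continuity_2d_pt_const. apply Pp_c2d; auto. apply (Pr_c2d u); auto.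
Qed.

Definition Phi m r := let s := 2 * r / m in s * dWf s / Wf s.
Definition dPhi m r := - r * Vp m r - Phi m r ^ 2 / r.

Lemma Phi_deriv m r : 0 < m -> 0 < r -> Wf (2 * r / m) <> 0 -> derivable_pt_lim (Phi m) r (dPhi m r).
Proof.
  intros Hm Hr HW. set (s := 2 * r / m).
  assert (Hs : 0 < s) by (unfold s; apply Rdiv_lt_0_compat; lra).
  assert (Hsig : derivable_pt_lim (fun r => 2 * r / m) r (2 / m)).
  { apply is_derive_Reals. auto_derive; auto. field. lra. }
  assert (D1 : derivable_pt_lim (fun r => (2 * r / m) * dWf (2 * r / m)) r (- 2 * Wf s / (s + 1) ^ 2 * (2 / m))).
  { apply (derivable_pt_lim_comp (fun r => 2 * r / m) (fun s => s * dWf s)); auto. apply sdWf_spec; auto. }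
  assert (D2 : derivable_pt_lim (fun r => Wf (2 * r / m)) r (dWf s * (2 / m))).
  { apply (derivable_pt_lim_comp (fun r => 2 * r / m) Wf); auto. apply dWf_spec; auto. }
  pose proof (derivable_pt_lim_div _ _ _ _ _ D1 D2 HW) as D3. simpl in D3.
  replace (dPhi m r) with ((- 2 * Wf s / (s + 1) ^ 2 * (2 / m) * Wf (2 * r / m) - dWf s * (2 / m) * (2 * r / m * dWf (2 * r / m))) / (Wf (2 * r / m))²).
  - apply (dlim_ext_loc (fun r => (2 * r / m * dWf (2 * r / m)) / Wf (2 * r / m)) (Phi m) _ _ 1); [lra| intros; reflexivity | exact D3].
  - fold s. unfold dPhi, Phi, Vp, Rsqr. fold s.
    replace r with (s * m / 2) by (unfold s; field; lra).
    field. repeat split; try lra. auto. apply Rgt_not_eq; nra.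
Qed.

Lemma RInt_scal_R f a b k : ex_RInt f a b -> RInt (fun x => k * f x) a b = k * RInt f a b.
Proof. intro H. apply (RInt_scal f a b k H). Qed.

Lemma ex_RInt_scal_R f a b k : ex_RInt f a b -> ex_RInt (fun x => k * f x) a b.
Proof. intro H. apply (ex_RInt_scal f a b k H). Qed.

Lemma RInt_plus_R f g a b : ex_RInt f a b -> ex_RInt g a b -> RInt (fun x => f x + g x) a b = RInt f a b + RInt g a b.
Proof. intros. apply (RInt_plus f g a b); auto. Qed.

Lemma ex_RInt_plus_R f g a b : ex_RInt f a b -> ex_RInt g a b -> ex_RInt (fun x => f x + g x) a b.
Proof. intros. apply (ex_RInt_plus f g a b); auto. Qed.

Lemma picone_pt m u fx fy r t : 0 < r ->
  dPhi m r * Pp u r t ^ 2 + Phi m r * (2 * Pp u r t * Pr fx fy r t) <= r * Gi m u fx fy r t.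
Proof.
  intro Hr. unfold Gi, dPhi, Pr.
  set (a := Pp fx r t). set (b := Pp fy r t). set (p := Pp u r t). set (F := Phi m r). set (V := Vp m r).
  pose proof (sin2_cos2 t) as Hsc. unfold Rsqr in Hsc.
  set (c := cos t) in *. set (s := sin t) in *.
  assert (E : r * (a ^ 2 + b ^ 2 - V * p ^ 2) - ((- r * V - F ^ 2 / r) * p ^ 2 + F * (2 * p * (c * a + s * b)))
     = (r * (c * a + s * b) - F * p) ^ 2 / r + r * (s * a - c * b) ^ 2).
  { replace (a ^ 2 + b ^ 2) with ((a ^ 2 + b ^ 2) * (s * s + c * c)) by (rewrite Hsc; ring).
    field. lra. }
  assert (0 <= (r * (c * a + s * b) - F * p) ^ 2 / r) by (apply Rdiv_le_0_compat; [apply pow2_ge_0|lra]).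
  assert (0 <= r * (s * a - c * b) ^ 2) by (apply Rmult_le_pos; [lra|apply pow2_ge_0]).
  lra.
Qed.

Definition dH m u fx fy r := hfun m u fx fy r - (dPhi m r * Jf u r + Phi m r * dJf u fx fy r).

Lemma dH_nonneg m u fx fy r : 0 < m -> 0 < r -> Cdata u fx fy -> 0 <= dH m u fx fy r.
Proof.
  intros Hm Hr HC. pose proof HC as [Hx [Hy [Cu [Cx Cy]]]]. pose proof PI_RGT_0.
  unfold dH, hfun, Jf, dJf.
  assert (EG : ex_RInt (Gi m u fx fy r) 0 (2 * PI)).
  { apply (ex_RInt_c2d (Gi m u fx fy)). intros. apply Gi_c2d; auto. }
  pose proof (ex_RInt_P2 u r Cu) as E1. pose proof (ex_RInt_PPr u fx fy r HC) as E2.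
  rewrite Rmult_comm, <- RInt_scal_R, <- RInt_scal_R, <- RInt_scal_R by auto.
  rewrite <- RInt_plus_R by (apply ex_RInt_scal_R; auto).
  assert (RInt (fun x => dPhi m r * Pp u r x ^ 2 + Phi m r * (2 * Pp u r x * Pr fx fy r x)) 0 (2 * PI)
     <= RInt (fun x => r * Gi m u fx fy r x) 0 (2 * PI)).
  { apply RInt_le. lra. apply ex_RInt_plus_R; apply ex_RInt_scal_R; auto. apply ex_RInt_scal_R; auto.
    intros. apply picone_pt; auto. }
  lra.
Qed.

Lemma ex_RInt_hfun_loc m u fx fy a b : 0 < m -> 0 < a -> 0 < b -> Cdata u fx fy -> ex_RInt (hfun m u fx fy) a b.
Proof.
  intros. apply (@ex_RInt_continuous R_CompleteNormedModule). intros z Hz.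
  apply continuity_pt_filterlim. apply hfun_cont; auto.
  destruct (Rle_dec a b). rewrite Rmin_left in Hz by lra. lra. rewrite Rmin_right in Hz by lra. lra.
Qed.

Definition Hf m u fx fy r := RInt (hfun m u fx fy) (m / 2) r - Phi m r * Jf u r.

Lemma Hf_deriv m u fx fy r : 0 < m -> 0 < r -> Wf (2 * r / m) <> 0 -> Cdata u fx fy ->
  derivable_pt_lim (Hf m u fx fy) r (dH m u fx fy r).
Proof.
  intros Hm Hr HW HC. unfold Hf, dH.
  apply derivable_pt_lim_minus.
  - apply is_derive_Reals. apply (is_derive_RInt (hfun m u fx fy) (fun b => RInt (hfun m u fx fy) (m/2) b) (m/2)).
    + exists (mkposreal r Hr). intros y Hy. apply (RInt_correct (V := R_CompleteNormedModule)).
      apply ex_RInt_hfun_loc; auto. lra. change (Rabs (y - r) < r) in Hy. apply Rabs_def2 in Hy. lra.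
    + apply continuity_pt_filterlim. apply hfun_cont; auto.
  - apply derivable_pt_lim_mult. apply Phi_deriv; auto. apply is_derive_Reals. apply Jf_deriv; auto.
Qed.

Lemma Phi_half m : 0 < m -> Phi m (m / 2) = 0.
Proof. intro. unfold Phi. replace (2 * (m / 2) / m) with 1 by (field; lra). rewrite dWf_1. unfold Rdiv. ring. Qed.

Lemma RInt_zero_fun (f : R -> R) a b : (forall x, f x = 0) -> RInt f a b = 0.
Proof.
  intro H. rewrite (RInt_ext f (fun _ => 0)) by auto. rewrite RInt_const.
  unfold scal; simpl; unfold mult; simpl. ring.
Qed.

Lemma Jf_circle u Rad : (forall x y, x ^ 2 + y ^ 2 = Rad ^ 2 -> u x y = 0) -> Jf u Rad = 0.
Proof.
  intro H. unfold Jf. apply RInt_zero_fun. intro t. unfold Pp. rewrite H. ring. apply polar_sq.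
Qed.

Lemma dJf_circle u fx fy Rad : (forall x y, x ^ 2 + y ^ 2 = Rad ^ 2 -> u x y = 0) -> dJf u fx fy Rad = 0.
Proof.
  intro H. unfold dJf. apply RInt_zero_fun. intro t. unfold Pp. rewrite H. ring. apply polar_sq.
Qed.

Lemma Hf_half m u fx fy : 0 < m -> Hf m u fx fy (m / 2) = 0.
Proof. intro. unfold Hf. rewrite RInt_point, Phi_half by auto. unfold zero; simpl. ring. Qed.

Lemma Wf_ne0_on m r : 0 < m -> m / 2 <= r -> r < m * sstar / 2 -> Wf (2 * r / m) <> 0.
Proof.
  intros Hm H1 H2. apply Rgt_not_eq. apply Wf_pos.
  - apply (Rmult_le_reg_r m); auto. unfold Rdiv. rewrite Rmult_assoc, Rinv_l; lra.
  - apply (Rmult_lt_reg_r m); auto. unfold Rdiv. rewrite Rmult_assoc, Rinv_l; lra.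
Qed.

Lemma Hf_nonneg m u fx fy s : 0 < m -> m / 2 < s -> s < m * sstar / 2 -> Cdata u fx fy ->
  0 <= Hf m u fx fy s.
Proof.
  intros Hm H1 H2 HC.
  destruct (MVT_cor2 (Hf m u fx fy) (dH m u fx fy) (m / 2) s H1) as [c [Hc1 Hc2]].
  - intros c Hc. apply Hf_deriv; auto. lra. apply (Wf_ne0_on m c); auto; lra.
  - rewrite Hf_half in Hc1 by auto. pose proof (dH_nonneg m u fx fy c Hm ltac:(lra) HC). nra.
Qed.

Lemma eps_le (x : R) : (forall eps, 0 < eps -> - eps <= x) -> 0 <= x.
Proof.
  intro H. destruct (Rle_dec 0 x); auto. exfalso. pose proof (H (- x / 2) ltac:(lra)). lra.
Qed.

Lemma cont_pt_delta f x eps : continuity_pt f x -> 0 < eps ->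
  exists d, 0 < d /\ forall y, Rabs (y - x) < d -> Rabs (f y - f x) < eps.
Proof.
  intros H He. destruct (H eps He) as [d [Hd Hdd]]. exists d. split; auto.
  intros y Hy. destruct (Req_dec y x) as [->|Hne].
  - rewrite Rminus_diag, Rabs_R0. auto.
  - apply (Hdd y). split; [split; [constructor|auto]|auto].
Qed.

Lemma stab_RInt m Rad u fx fy : 0 < m -> m / 2 < Rad -> Rad <= m * sstar / 2 -> Cdata u fx fy ->
  (forall x y, x ^ 2 + y ^ 2 = Rad ^ 2 -> u x y = 0) ->
  0 <= RInt (hfun m u fx fy) (m / 2) Rad.
Proof.
  intros Hm H1 H2 HC Hu. pose proof sstar_gt1 as Hss.
  destruct (Rlt_or_le Rad (m * sstar / 2)) as [HA|HB].
  - pose proof (Hf_nonneg m u fx fy Rad Hm H1 HA HC) as K. unfold Hf in K.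
    rewrite Jf_circle in K by auto. lra.
  - assert (HR : Rad = m * sstar / 2) by lra. clear H2 HB.
    assert (Hsig : 2 * Rad / m = sstar) by (rewrite HR; field; lra).
    apply eps_le. intros eps Heps.
    destruct (cont_pt_delta _ _ 1 (hfun_cont m u fx fy Rad Hm ltac:(lra) HC) Rlt_0_1) as [d1 [Hd1 K1]].
    set (M := Rabs (hfun m u fx fy Rad) + 1).
    assert (HM : 0 < M) by (unfold M; pose proof (Rabs_pos (hfun m u fx fy Rad)); lra).
    set (A := dWf sstar * (2 / m)).
    assert (HA : A < 0).
    { unfold A. pose proof (dWf_neg sstar Hss). assert (0 < 2 / m) by (apply Rdiv_lt_0_compat; lra). nra. }
    assert (Dw : derivable_pt_lim (fun s => Wf (2 * s / m)) Rad A).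
    { unfold A. apply (derivable_pt_lim_comp (fun s => 2 * s / m) Wf).
      apply is_derive_Reals. auto_derive; auto. field. lra.
      rewrite Hsig. apply dWf_spec. lra. }
    destruct (Dw (- A / 2) ltac:(lra)) as [d2 K2].
    assert (CN : continuity_pt (fun s => 2 * s / m * dWf (2 * s / m)) Rad).
    { eapply cont_of_is_derive. unfold dWf. auto_derive.
      - assert (0 < 2 * Rad / m) by (apply Rdiv_lt_0_compat; lra). repeat split; try lra; auto.
        apply Rgt_not_eq. nra.
      - reflexivity. }
    destruct (cont_pt_delta _ _ 1 CN Rlt_0_1) as [d4 [Hd4 K4]].
    set (B := Rabs (2 * Rad / m * dWf (2 * Rad / m)) + 1).
    assert (HB : 0 < B) by (unfold B; pose proof (Rabs_pos (2 * Rad / m * dWf (2 * Rad / m))); lra).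
    set (eta := eps * (- A) / (4 * B)).
    assert (Heta : 0 < eta) by (unfold eta; apply Rdiv_lt_0_compat; nra).
    assert (DJ : derivable_pt_lim (Jf u) Rad 0).
    { rewrite <- (dJf_circle u fx fy Rad Hu). apply is_derive_Reals. apply Jf_deriv; auto. }
    destruct (DJ eta Heta) as [d3 K3].
    set (dm := Rmin (Rmin (Rmin d1 d2) (Rmin d3 d4)) (Rmin (Rad - m / 2) (eps / (2 * M)))).
    assert (Hdm : 0 < dm).
    { unfold dm. repeat apply Rmin_pos; try lra; try apply cond_pos. apply Rdiv_lt_0_compat; lra. }
    assert (Hdm1 : dm <= d1) by (unfold dm; repeat (eapply Rle_trans; [apply Rmin_l|]); lra).
    assert (Hdm2 : dm <= d2) by (unfold dm; eapply Rle_trans; [apply Rmin_l|]; eapply Rle_trans; [apply Rmin_l|]; apply Rmin_r).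
    assert (Hdm3 : dm <= d3) by (unfold dm; eapply Rle_trans; [apply Rmin_l|]; eapply Rle_trans; [apply Rmin_r|]; apply Rmin_l).
    assert (Hdm4 : dm <= d4) by (unfold dm; eapply Rle_trans; [apply Rmin_l|]; eapply Rle_trans; [apply Rmin_r|]; apply Rmin_r).
    assert (Hdm5 : dm <= Rad - m / 2) by (unfold dm; eapply Rle_trans; [apply Rmin_r|]; apply Rmin_l).
    assert (Hdm6 : dm <= eps / (2 * M)) by (unfold dm; eapply Rle_trans; [apply Rmin_r|]; apply Rmin_r).
    set (h := - dm / 2). set (s := Rad + h).
    assert (Hh0 : h <> 0) by (unfold h; lra).
    assert (Hhabs : Rabs h = dm / 2) by (unfold h; rewrite Rabs_left; lra).
    assert (Hs1 : m / 2 < s) by (unfold s, h; lra).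
    assert (Hs2 : s < m * sstar / 2) by (unfold s, h; lra).
    pose proof (Hf_nonneg m u fx fy s Hm Hs1 Hs2 HC) as P1. unfold Hf in P1.
    assert (P2 : Rabs (RInt (hfun m u fx fy) s Rad) <= eps / 2).
    { eapply Rle_trans. apply (abs_RInt_le_const _ s Rad M). unfold s, h; lra.
      apply ex_RInt_hfun_loc; auto; lra.
      intros t Ht. assert (Rabs (t - Rad) < d1) by (apply Rabs_def1; unfold s, h in Ht; lra).
      pose proof (K1 t H). unfold M. pose proof (Rabs_triang_inv (hfun m u fx fy t) (hfun m u fx fy Rad)). lra.
      replace (Rad - s) with (dm / 2) by (unfold s, h; lra).
      apply (Rmult_le_compat_r M) in Hdm6; [|lra].
      replace (eps / (2 * M) * M) with (eps / 2) in Hdm6 by (field; lra). lra. }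
    assert (P3 : Rabs (Phi m s * Jf u s) <= eps / 2).
    { pose proof (K2 h Hh0 ltac:(lra)) as Q2. rewrite Hsig, Wf_sstar, Rminus_0_r in Q2. fold s in Q2.
      pose proof (K3 h Hh0 ltac:(lra)) as Q3.
      replace (Jf u Rad) with 0 in Q3 by (symmetry; apply Jf_circle; auto).
      rewrite Rminus_0_r, Rminus_0_r in Q3. fold s in Q3.
      assert (Q4 : Rabs (2 * s / m * dWf (2 * s / m)) < B).
      { pose proof (K4 s ltac:(unfold s, h; rewrite Rabs_left; lra)). unfold B.
        pose proof (Rabs_triang_inv (2 * s / m * dWf (2 * s / m)) (2 * Rad / m * dWf (2 * Rad / m))). lra. }
      set (W := Wf (2 * s / m)) in *. set (J := Jf u s) in *. set (Nn := 2 * s / m * dWf (2 * s / m)) in *.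
      assert (HWh : - A / 2 * Rabs h <= Rabs W).
      { apply Rabs_def2 in Q2. destruct Q2 as [Q2a Q2b].
        assert (W / h < A / 2) by lra.
        assert (Rabs (W / h) > - A / 2) by (rewrite Rabs_left; lra).
        assert (EW : Rabs W = Rabs (W / h) * Rabs h) by (rewrite <- Rabs_mult; f_equal; field; auto).
        rewrite EW. apply Rmult_le_compat_r; [apply Rabs_pos|lra]. }
      assert (HJh : Rabs J <= eta * Rabs h).
      { assert (EJ : forall z : R, Rabs z = Rabs (z / h) * Rabs h) by (intro z; rewrite <- Rabs_mult; f_equal; field; auto).
        rewrite (EJ J). apply Rmult_le_compat_r; [apply Rabs_pos|lra]. }
      assert (0 < Rabs h) by (apply Rabs_pos_lt; auto).
      assert (HW0 : 0 < Rabs W) by nra.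
      unfold Phi. fold Nn. fold W. rewrite Rabs_mult. unfold Rdiv. rewrite Rabs_mult, Rabs_inv.
      apply (Rmult_le_reg_r (Rabs W)); auto.
      replace (Rabs Nn * / Rabs W * Rabs J * Rabs W) with (Rabs Nn * Rabs J) by (field; lra).
      assert (Rabs Nn * Rabs J <= B * (eta * Rabs h)).
      { apply Rmult_le_compat; try apply Rabs_pos; lra. }
      assert (B * (eta * Rabs h) = eps / 2 * (- A / 2 * Rabs h)) by (unfold eta; field; lra).
      assert (eps / 2 * (- A / 2 * Rabs h) <= eps / 2 * Rabs W) by (apply Rmult_le_compat_l; lra).
      lra. }
    rewrite <- (RInt_Chasles (hfun m u fx fy) (m / 2) s Rad).
    2: apply ex_RInt_hfun_loc; auto; lra.
    2: apply ex_RInt_hfun_loc; auto; lra.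
    change (plus ?a ?b) with (a + b).
    assert (- RInt (hfun m u fx fy) s Rad <= Rabs (RInt (hfun m u fx fy) s Rad)) by (rewrite <- Rabs_Ropp; apply Rle_abs).
    assert (- (Phi m s * Jf u s) <= Rabs (Phi m s * Jf u s)) by (rewrite <- Rabs_Ropp; apply Rle_abs).
    lra.
Qed.

Fixpoint D1 (n : nat) (P : R -> Prop) (f : R -> R) : Prop :=
  match n with
  | O => forall x, P x -> continuity_pt f x
  | S k => exists f', (forall x, P x -> derivable_pt_lim f x (f' x)) /\ D1 k P f'
  end.

Lemma D1_cont n P f : D1 n P f -> forall x, P x -> continuity_pt f x.
Proof.
  destruct n as [|n].
  - intros H. exact H.
  - intros [f' [Hd _]] x Hx.
    apply derivable_continuous_pt. exists (f' x). apply Hd. exact Hx.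
Qed.

Lemma D1_down n P f : D1 (S n) P f -> D1 n P f.
Proof.
  revert f. induction n as [|n IH]; intros f H.
  - simpl. apply (D1_cont 1 P f H).
  - destruct H as [f' [Hd H']]. exists f'. split; auto.
Qed.

Lemma D1_ext n P f g : (forall x, f x = g x) -> D1 n P f -> D1 n P g.
Proof. intros H. replace g with f; auto. apply functional_extensionality; auto. Qed.

Lemma D1_const n P c : D1 n P (fun _ => c).
Proof.
  revert c. induction n as [|n IH]; intro c; simpl.
  - intros. apply continuity_pt_const. intros a b; reflexivity.
  - exists (fun _ => 0). split; auto. intros. apply derivable_pt_lim_const.
Qed.

Lemma D1_id n P : D1 n P (fun x => x).
Proof.
  destruct n as [|n]; simpl.
  - intros. apply derivable_continuous_pt, derivable_pt_id.
  - exists (fun _ => 1). split. intros. apply derivable_pt_lim_id. apply D1_const.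
Qed.

Lemma D1_plus n P f g : D1 n P f -> D1 n P g -> D1 n P (fun x => f x + g x).
Proof.
  revert f g. induction n as [|n IH]; simpl; intros f g Hf Hg.
  - intros x Hx. apply (continuity_pt_plus f g); auto.
  - destruct Hf as [f' [Hf Hf']]. destruct Hg as [g' [Hg Hg']].
    exists (fun x => f' x + g' x). split; auto. intros. apply (derivable_pt_lim_plus f g); auto.
Qed.

Lemma D1_mult n P f g : D1 n P f -> D1 n P g -> D1 n P (fun x => f x * g x).
Proof.
  revert f g. induction n as [|n IH]; simpl; intros f g Hf Hg.
  - intros x Hx. apply (continuity_pt_mult f g); auto.
  - pose proof (D1_down _ _ _ Hf) as Hfd. pose proof (D1_down _ _ _ Hg) as Hgd.
    destruct Hf as [f' [Hf Hf']]. destruct Hg as [g' [Hg Hg']].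
    exists (fun x => f' x * g x + f x * g' x). split.
    + intros. apply (derivable_pt_lim_mult f g); auto.
    + apply D1_plus; apply IH; auto.
Qed.

Lemma D1_comp n P Q f g : D1 n P f -> D1 n Q g -> (forall x, Q x -> P (g x)) -> D1 n Q (fun x => f (g x)).
Proof.
  revert f g. induction n as [|n IH]; simpl; intros f g Hf Hg HPQ.
  - intros x Hx. apply (continuity_pt_comp g f); auto.
  - pose proof (D1_down _ _ _ Hg) as Hgd.
    destruct Hf as [f' [Hf Hf']]. destruct Hg as [g' [Hg Hg']].
    exists (fun x => f' (g x) * g' x). split.
    + intros. apply (derivable_pt_lim_comp g f); auto.
    + apply D1_mult; auto.
Qed.

Definition ppos (x : R) := 0 < x.

Lemma D1_inv n : D1 n ppos Rinv.
Proof.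
  induction n as [|n IH]; simpl.
  - intros x Hx. apply derivable_continuous_pt. exists (- / x ^ 2). apply is_derive_Reals.
    unfold ppos in Hx. auto_derive. lra. field. lra.
  - exists (fun x => -1 * (/ x * / x)). split.
    + intros x Hx. unfold ppos in Hx. apply is_derive_Reals. auto_derive. lra. field. lra.
    + apply D1_mult. apply D1_const. apply D1_mult; auto.
Qed.

Lemma D1_ln n : D1 n ppos ln.
Proof.
  destruct n as [|n]; simpl.
  - intros x Hx. apply derivable_continuous_pt. exists (/ x). apply derivable_pt_lim_ln. auto.
  - exists Rinv. split. intros. apply derivable_pt_lim_ln. auto. apply D1_inv.
Qed.

Lemma D1_sqrt n : D1 n ppos sqrt.
Proof.
  induction n as [|n IH]; simpl.
  - intros x Hx. apply derivable_continuous_pt. exists (/ (2 * sqrt x)). apply derivable_pt_lim_sqrt. auto.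
  - exists (fun x => / 2 * / sqrt x). split.
    + intros x Hx. replace (/ 2 * / sqrt x) with (/ (2 * sqrt x)).
      apply derivable_pt_lim_sqrt. auto. unfold ppos in Hx. assert (0 < sqrt x) by (apply sqrt_lt_R0; auto). field. lra.
    + apply D1_mult. apply D1_const. apply (D1_comp n ppos ppos Rinv sqrt); auto. apply D1_inv.
      intros x Hx. apply sqrt_lt_R0. auto.
Qed.

Lemma D1_exp n P : D1 n P exp.
Proof.
  induction n as [|n IH]; simpl.
  - intros. apply derivable_continuous_pt, derivable_pt_exp.
  - exists exp. split; auto. intros. apply derivable_pt_lim_exp.
Qed.

Definition Eb (j : nat) (s : R) : R := if Rle_dec s 0 then 0 else (/ s) ^ j * exp (- / s).

Lemma Eb_neg j s : s <= 0 -> Eb j s = 0.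
Proof. intro. unfold Eb. destruct (Rle_dec s 0); auto; lra. Qed.

Lemma Eb_pos j s : 0 < s -> Eb j s = (/ s) ^ j * exp (- / s).
Proof. intro. unfold Eb. destruct (Rle_dec s 0); auto; lra. Qed.

Lemma fact_bound y k : 0 < y -> y ^ k * exp (- y) <= INR (Factorial.fact (S k)) / y.
Proof.
  intro Hy. pose proof (exp_ge_taylor y (S k) ltac:(lra)) as T.
  rewrite tech5 in T.
  assert (0 <= sum_f_R0 (fun k0 : nat => y ^ k0 / INR (Factorial.fact k0)) k).
  { apply cond_pos_sum. intro n. apply Rdiv_le_0_compat. apply pow_le; lra. apply lt_0_INR, Factorial.lt_O_fact. }
  assert (Hf : 0 < INR (Factorial.fact (S k))) by apply lt_0_INR, Factorial.lt_O_fact.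
  assert (y ^ S k / INR (Factorial.fact (S k)) <= exp y) by lra.
  rewrite exp_Ropp. pose proof (exp_pos y).
  apply (Rmult_le_reg_r (y * exp y)). nra.
  replace (y ^ k * / exp y * (y * exp y)) with (y ^ S k) by (simpl; field; lra).
  replace (INR (Factorial.fact (S k)) / y * (y * exp y)) with (INR (Factorial.fact (S k)) * exp y) by (field; lra).
  apply (Rmult_le_compat_l (INR (Factorial.fact (S k)))) in H0; [|lra].
  replace (INR (Factorial.fact (S k)) * (y ^ S k / INR (Factorial.fact (S k)))) with (y ^ S k) in H0 by (field; lra). lra.
Qed.

Lemma dEb j s : derivable_pt_lim (Eb j) s (- INR j * Eb (S j) s + Eb (S (S j)) s).
Proof.
  destruct (Rtotal_order s 0) as [Hn|[H0|Hp]].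
  - rewrite !Eb_neg by lra. replace (- INR j * 0 + 0) with 0 by ring.
    apply (dlim_ext_loc (fun _ => 0) _ _ _ (- s)); [lra| |apply derivable_pt_lim_const].
    intros t Ht. rewrite Eb_neg; auto. apply Rabs_def2 in Ht. lra.
  - subst s. rewrite !Eb_neg by lra. replace (- INR j * 0 + 0) with 0 by ring.
    intros eps Heps.
    set (F := INR (Factorial.fact (S (S j)))).
    assert (HF : 0 < F) by apply lt_0_INR, Factorial.lt_O_fact.
    assert (Hd : 0 < eps / F) by (apply Rdiv_lt_0_compat; lra).
    exists (mkposreal _ Hd). simpl. intros h Hh Hhd.
    rewrite Rplus_0_l, (Eb_neg j 0) by lra. rewrite Rminus_0_r, Rminus_0_r.
    destruct (Rle_dec h 0) as [Hl|Hl].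
    + rewrite Eb_neg by auto. unfold Rdiv. rewrite Rmult_0_l, Rabs_R0. lra.
    + rewrite Eb_pos by lra.
      assert (Hhp : 0 < h) by lra.
      replace ((/ h) ^ j * exp (- / h) / h) with ((/ h) ^ S j * exp (- / h)) by (simpl; field; lra).
      pose proof (fact_bound (/ h) (S j) ltac:(apply Rinv_0_lt_compat; lra)) as K.
      replace (INR (Factorial.fact (S (S j))) / / h) with (F * h) in K by (unfold F; field; lra).
      rewrite Rabs_pos_eq by (apply Rmult_le_pos; [apply pow_le; apply Rlt_le, Rinv_0_lt_compat; lra| apply Rlt_le, exp_pos]).
      eapply Rle_lt_trans; [apply K|]. rewrite Rabs_pos_eq in Hhd by lra.
      apply (Rmult_lt_compat_l F) in Hhd; auto. replace (F * (eps / F)) with eps in Hhd by (field; lra).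
      lra.
  - rewrite !Eb_pos by lra.
    apply (dlim_ext_loc (fun s => (/ s) ^ j * exp (- / s)) _ _ _ s); [lra| |].
    + intros t Ht. apply Rabs_def2 in Ht. rewrite Eb_pos; auto. lra.
    + assert (Dp : derivable_pt_lim (fun s => (/ s) ^ j) s (INR j * (/ s) ^ Init.Nat.pred j * (- / s ^ 2))).
      { apply (derivable_pt_lim_comp Rinv (fun y => y ^ j)). apply is_derive_Reals. auto_derive. lra. field. lra.
        apply derivable_pt_lim_pow. }
      assert (De : derivable_pt_lim (fun s => exp (- / s)) s (exp (- / s) * / s ^ 2)).
      { apply (derivable_pt_lim_comp (fun s => - / s) exp). apply is_derive_Reals. auto_derive. lra. field. lra.
        apply derivable_pt_lim_exp. }
      pose proof (derivable_pt_lim_mult _ _ _ _ _ Dp De) as D. simpl in D.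
      apply (dlim_ext_loc _ _ _ _ 1 ltac:(lra) (fun t _ => eq_refl)) in D.
      replace (- INR j * ((/ s) ^ S j * exp (- / s)) + (/ s) ^ S (S j) * exp (- / s))
        with (INR j * (/ s) ^ Init.Nat.pred j * (- / s ^ 2) * exp (- / s) + (/ s) ^ j * (exp (- / s) * / s ^ 2)).
      exact D.
      destruct j as [|k].
      * simpl. field. lra.
      * rewrite S_INR. simpl Init.Nat.pred. simpl. field. lra.
Qed.

Lemma D1_Eb n j : D1 n (fun _ => True) (Eb j).
Proof.
  revert j. induction n as [|n IH]; intro j; simpl.
  - intros x _. apply derivable_continuous_pt. eexists. apply dEb.
  - exists (fun s => - INR j * Eb (S j) s + Eb (S (S j)) s). split.
    + intros. apply dEb.
    + apply D1_plus; auto. apply D1_mult; auto. apply D1_const.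
Qed.

Lemma Cn_cont n f : Cn n f -> cont2 f.
Proof. destruct n; simpl; [auto| tauto]. Qed.

Lemma Cn_down n f : Cn (S n) f -> Cn n f.
Proof.
  revert f. induction n as [|n IH]; intros f H.
  - simpl. apply (Cn_cont 1 f H).
  - destruct H as [Hc [fx [fy [Hx [Hy [Cx Cy]]]]]]. split; auto.
    exists fx, fy. repeat split; auto.
Qed.

Lemma Cn_plus n f g : Cn n f -> Cn n g -> Cn n (fun x y => f x y + g x y).
Proof.
  revert f g. induction n as [|n IH]; intros f g Hf Hg.
  - simpl in *. apply cont2_of_c2d. intros. apply continuity_2d_pt_plus; apply c2d_of_cont2; auto.
  - destruct Hf as [Cf [fx [fy [Hfx [Hfy [Cfx Cfy]]]]]]. destruct Hg as [Cg [gx [gy [Hgx [Hgy [Cgx Cgy]]]]]].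
    split. apply cont2_of_c2d. intros. apply continuity_2d_pt_plus; apply c2d_of_cont2; auto.
    exists (fun x y => fx x y + gx x y), (fun x y => fy x y + gy x y). repeat split; auto.
    + intros. apply (derivable_pt_lim_plus (fun t => f t y) (fun t => g t y)); auto.
    + intros. apply (derivable_pt_lim_plus (fun t => f x t) (fun t => g x t)); auto.
Qed.

Lemma Cn_mult n f g : Cn n f -> Cn n g -> Cn n (fun x y => f x y * g x y).
Proof.
  revert f g. induction n as [|n IH]; intros f g Hf Hg.
  - simpl in *. apply cont2_of_c2d. intros. apply continuity_2d_pt_mult; apply c2d_of_cont2; auto.
  - pose proof (Cn_down _ _ Hf) as Hfd. pose proof (Cn_down _ _ Hg) as Hgd.
    destruct Hf as [Cf [fx [fy [Hfx [Hfy [Cfx Cfy]]]]]]. destruct Hg as [Cg [gx [gy [Hgx [Hgy [Cgx Cgy]]]]]].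
    split. apply cont2_of_c2d. intros. apply continuity_2d_pt_mult; apply c2d_of_cont2; auto.
    exists (fun x y => fx x y * g x y + f x y * gx x y), (fun x y => fy x y * g x y + f x y * gy x y).
    repeat split.
    + intros. apply (derivable_pt_lim_mult (fun t => f t y) (fun t => g t y)); auto.
    + intros. apply (derivable_pt_lim_mult (fun t => f x t) (fun t => g x t)); auto.
    + apply Cn_plus; apply IH; auto.
    + apply Cn_plus; apply IH; auto.
Qed.

Lemma Cn_const n c : Cn n (fun _ _ => c).
Proof.
  revert c. induction n as [|n IH]; intro c.
  - simpl. apply cont2_of_c2d. intros. apply continuity_2d_pt_const.
  - split. apply cont2_of_c2d. intros. apply continuity_2d_pt_const.
    exists (fun _ _ => 0), (fun _ _ => 0). repeat split; auto; intros; apply derivable_pt_lim_const.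
Qed.

Lemma Cn_x n : Cn n (fun x _ => x).
Proof.
  destruct n as [|n].
  - simpl. apply cont2_of_c2d. intros. apply continuity_2d_pt_id1.
  - split. apply cont2_of_c2d. intros. apply continuity_2d_pt_id1.
    exists (fun _ _ => 1), (fun _ _ => 0). repeat split; try apply Cn_const; intros.
    apply derivable_pt_lim_id. apply derivable_pt_lim_const.
Qed.

Lemma Cn_y n : Cn n (fun _ y => y).
Proof.
  destruct n as [|n].
  - simpl. apply cont2_of_c2d. intros. apply continuity_2d_pt_id2.
  - split. apply cont2_of_c2d. intros. apply continuity_2d_pt_id2.
    exists (fun _ _ => 0), (fun _ _ => 1). repeat split; try apply Cn_const; intros.
    apply derivable_pt_lim_const. apply derivable_pt_lim_id.
Qed.

Lemma Cn_comp1 n F g : D1 n (fun _ => True) F -> Cn n g -> Cn n (fun x y => F (g x y)).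
Proof.
  revert F g. induction n as [|n IH]; intros F g HF Hg.
  - simpl in *. apply cont2_of_c2d. intros. apply continuity_1d_2d_pt_comp. apply HF; auto.
    apply c2d_of_cont2; auto.
  - pose proof (Cn_down _ _ Hg) as Hgd. pose proof (D1_cont _ _ _ HF) as CF.
    destruct HF as [F' [HF' DF']]. destruct Hg as [Cg [gx [gy [Hgx [Hgy [Cgx Cgy]]]]]].
    split. apply cont2_of_c2d. intros. apply continuity_1d_2d_pt_comp. apply CF; auto. apply c2d_of_cont2; auto.
    exists (fun x y => F' (g x y) * gx x y), (fun x y => F' (g x y) * gy x y). repeat split.
    + intros. apply (derivable_pt_lim_comp (fun t => g t y) F); auto.
    + intros. apply (derivable_pt_lim_comp (fun t => g x t) F); auto.
    + apply Cn_mult; auto.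
    + apply Cn_mult; auto.
Qed.

Lemma smooth_radial (G : R -> R) : (forall n, D1 n (fun _ => True) G) -> smooth2 (fun x y => G (x * x + y * y)).
Proof.
  intros HG n. apply (Cn_comp1 n G (fun x y => x * x + y * y)); auto.
  apply Cn_plus; apply Cn_mult; [apply Cn_x|apply Cn_x|apply Cn_y|apply Cn_y].
Qed.

Definition htr (s1 K s : R) := s + (K + s * s) * Eb 0 (s1 - s).

Lemma D1_htr n s1 K : D1 n (fun _ => True) (htr s1 K).
Proof.
  unfold htr. apply D1_plus. apply D1_id. apply D1_mult.
  apply D1_plus. apply D1_const. apply D1_mult; apply D1_id.
  apply (D1_comp n (fun _ => True) (fun _ => True) (Eb 0) (fun s => s1 - s)); auto.
  apply D1_Eb. apply D1_ext with (f := fun s => s1 + -1 * s). intros; ring.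
  apply D1_plus. apply D1_const. apply D1_mult. apply D1_const. apply D1_id.
Qed.

Lemma htr_id s1 K s : s1 <= s -> htr s1 K s = s.
Proof. intro. unfold htr. rewrite Eb_neg by lra. ring. Qed.

Lemma htr_pos s1 s : 0 < s1 -> 0 < htr s1 (/ (exp (- / s1) * exp (- / s1))) s.
Proof.
  intro Hs1. set (c0 := exp (- / s1)). assert (Hc0 : 0 < c0) by apply exp_pos.
  unfold htr. destruct (Rle_dec s1 s).
  - rewrite Eb_neg by lra. assert (0 < s) by lra. lra.
  - rewrite Eb_pos by lra. simpl pow. rewrite Rmult_1_l.
    assert (HK : 0 < / (c0 * c0)) by (apply Rinv_0_lt_compat; nra).
    destruct (Rlt_le_dec 0 s).
    + assert (0 < (/ (c0 * c0) + s * s) * exp (- / (s1 - s))) by (apply Rmult_lt_0_compat; [nra|apply exp_pos]). lra.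
    + assert (Hge : c0 <= exp (- / (s1 - s))).
      { unfold c0. destruct (Req_dec s 0) as [->|Hn]. rewrite Rminus_0_r. lra.
        apply Rlt_le, exp_increasing. apply Ropp_lt_contravar. apply Rinv_lt_contravar; nra. }
      assert (E1 : (/ (c0 * c0) + s * s) * c0 = / c0 + c0 * (s * s)) by (field; lra).
      assert ((/ (c0 * c0) + s * s) * c0 <= (/ (c0 * c0) + s * s) * exp (- / (s1 - s))) by (apply Rmult_le_compat_l; nra).
      assert (0 < / c0 + c0 * (s * s) + s).
      { assert (E2 : / c0 + c0 * (s * s) + s = c0 * (s + / (2 * c0)) ^ 2 + 3 / (4 * c0)) by (field; lra).
        rewrite E2. assert (0 < 3 / (4 * c0)) by (apply Rdiv_lt_0_compat; lra).
        assert (0 <= c0 * (s + / (2 * c0)) ^ 2) by (apply Rmult_le_pos; [lra|apply pow2_ge_0]). lra. }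
      lra.
Qed.

Definition Kc (m : R) := / (exp (- / (m * m / 8)) * exp (- / (m * m / 8))).
Definition Gt (m cc s : R) := Wf (2 * sqrt (htr (m * m / 8) (Kc m) s) / m) - cc.

Lemma D1_Wf n : D1 n ppos Wf.
Proof.
  apply D1_ext with (f := fun s => (4 + (s + -1) * (2 + -1 * ln s)) * / (s + 1)).
  { intro s. unfold Wf, Nw. unfold Rdiv. ring. }
  apply D1_mult.
  - apply D1_plus. apply D1_const. apply D1_mult. apply D1_plus. apply D1_id. apply D1_const.
    apply D1_plus. apply D1_const. apply D1_mult. apply D1_const. apply D1_ln.
  - apply (D1_comp n ppos ppos Rinv (fun s => s + 1)). apply D1_inv. apply D1_plus. apply D1_id. apply D1_const.
    unfold ppos. intros; lra.
Qed.

Lemma D1_Gt m cc n : 0 < m -> D1 n (fun _ => True) (Gt m cc).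
Proof.
  intro Hm. unfold Gt. apply D1_ext with (f := fun s => Wf (2 * sqrt (htr (m * m / 8) (Kc m) s) / m) + -1 * cc).
  { intros; ring. }
  apply D1_plus; [|apply D1_const].
  assert (Hp : forall s, 0 < htr (m * m / 8) (Kc m) s) by (intro s; apply htr_pos; nra).
  apply (D1_comp n ppos (fun _ => True) Wf (fun s => 2 * sqrt (htr (m * m / 8) (Kc m) s) / m)).
  - apply D1_Wf.
  - apply D1_ext with (f := fun s => (2 / m) * sqrt (htr (m * m / 8) (Kc m) s)). { intros; unfold Rdiv; ring. }
    apply D1_mult. apply D1_const.
    apply (D1_comp n ppos (fun _ => True) sqrt). apply D1_sqrt. apply D1_htr. intros; apply Hp.
  - intros s _. unfold ppos. apply Rdiv_lt_0_compat; [|auto]. apply Rmult_lt_0_compat; [lra|]. apply sqrt_lt_R0. auto.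
Qed.

Lemma Gt_val m cc r : 0 < m -> m / 2 <= r -> Gt m cc (r * r) = Wf (2 * r / m) - cc.
Proof.
  intros Hm Hr. unfold Gt. rewrite htr_id by nra. rewrite sqrt_square by lra. reflexivity.
Qed.

Lemma Gt_dval m cc r G' : 0 < m -> m / 2 <= r -> (forall x, derivable_pt_lim (Gt m cc) x (G' x)) ->
  G' (r * r) * (2 * r) = dWf (2 * r / m) * (2 / m).
Proof.
  intros Hm Hr HG.
  assert (D1' : derivable_pt_lim (fun z => Gt m cc (z * z)) r (G' (r * r) * (2 * r))).
  { apply (derivable_pt_lim_comp (fun z => z * z) (Gt m cc)); auto.
    apply is_derive_Reals. auto_derive; auto. ring. }
  assert (D2 : derivable_pt_lim (fun z => Wf (2 * z / m) - cc) r (dWf (2 * r / m) * (2 / m))).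
  { replace (dWf (2 * r / m) * (2 / m)) with (dWf (2 * r / m) * (2 / m) - 0) by ring.
    apply (derivable_pt_lim_minus (fun z => Wf (2 * z / m)) (fun _ => cc)); [|apply derivable_pt_lim_const].
    apply (derivable_pt_lim_comp (fun z => 2 * z / m) Wf).
    apply is_derive_Reals. auto_derive; auto. field. lra.
    apply dWf_spec. apply Rdiv_lt_0_compat; lra. }
  apply (dlim_ext_loc _ (fun z => Gt m cc (z * z)) _ _ (r / 4)) in D2.
  - eapply uniqueness_limite; eauto.
  - lra.
  - intros z Hz. apply Rabs_def2 in Hz. symmetry. unfold Gt. rewrite htr_id by nra.
    rewrite sqrt_square by lra. reflexivity.
Qed.

Definition qf (x y : R) := x * x + y * y.

Lemma c2d_qf x y : continuity_2d_pt qf x y.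
Proof.
  unfold qf. apply continuity_2d_pt_plus; apply continuity_2d_pt_mult;
  try apply continuity_2d_pt_id1; apply continuity_2d_pt_id2.
Qed.

Lemma Cdata_radial G G' : (forall x, derivable_pt_lim G x (G' x)) -> (forall x, continuity_pt G' x) ->
  Cdata (fun x y => G (x * x + y * y)) (fun x y => G' (x * x + y * y) * (2 * x)) (fun x y => G' (x * x + y * y) * (2 * y)).
Proof.
  intros HG HC. repeat split.
  - intros x y. apply (derivable_pt_lim_comp (fun t => t * t + y * y) G); auto.
    apply is_derive_Reals. auto_derive; auto. ring.
  - intros x y. apply (derivable_pt_lim_comp (fun t => x * x + t * t) G); auto.
    apply is_derive_Reals. auto_derive; auto. ring.
  - intros x y. apply (continuity_1d_2d_pt_comp G qf). apply derivable_continuous_pt. exact (exist _ (G' (qf x y)) (HG _)).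
    apply c2d_qf.
  - intros x y. apply continuity_2d_pt_mult. apply (continuity_1d_2d_pt_comp G' qf). auto. apply c2d_qf.
    apply continuity_2d_pt_mult. apply continuity_2d_pt_const. apply continuity_2d_pt_id1.
  - intros x y. apply continuity_2d_pt_mult. apply (continuity_1d_2d_pt_comp G' qf). auto. apply c2d_qf.
    apply continuity_2d_pt_mult. apply continuity_2d_pt_const. apply continuity_2d_pt_id2.
Qed.

Definition Fa m cc r := let s := 2 * r / m in s * dWf s * (Wf s - 2 * cc).
Definition dFa m cc r := let s := 2 * r / m in
  (2 / m) * (- 2 * Wf s / (s + 1) ^ 2 * (Wf s - 2 * cc) + s * dWf s * dWf s).

Lemma Fa_deriv m cc r : 0 < m -> 0 < r -> derivable_pt_lim (Fa m cc) r (dFa m cc r).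
Proof.
  intros Hm Hr. set (s := 2 * r / m).
  assert (Hs : 0 < s) by (unfold s; apply Rdiv_lt_0_compat; lra).
  assert (Hsig : derivable_pt_lim (fun r => 2 * r / m) r (2 / m)).
  { apply is_derive_Reals. auto_derive; auto. field. lra. }
  assert (D1' : derivable_pt_lim (fun r => (2 * r / m) * dWf (2 * r / m)) r (- 2 * Wf s / (s + 1) ^ 2 * (2 / m))).
  { apply (derivable_pt_lim_comp (fun r => 2 * r / m) (fun s => s * dWf s)); auto. apply sdWf_spec; auto. }
  assert (D2 : derivable_pt_lim (fun r => Wf (2 * r / m) - 2 * cc) r (dWf s * (2 / m) - 0)).
  { apply (derivable_pt_lim_minus (fun r => Wf (2 * r / m)) (fun _ => 2 * cc)); [|apply derivable_pt_lim_const].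
    apply (derivable_pt_lim_comp (fun r => 2 * r / m) Wf); auto. apply dWf_spec; auto. }
  pose proof (derivable_pt_lim_mult _ _ _ _ _ D1' D2) as D3.
  apply (dlim_ext_loc _ (Fa m cc) _ _ 1 ltac:(lra) (fun t _ => eq_refl)) in D3.
  replace (dFa m cc r) with (- 2 * Wf s / (s + 1) ^ 2 * (2 / m) * (Wf (2 * r / m) - 2 * cc) + 2 * r / m * dWf (2 * r / m) * (dWf s * (2 / m) - 0)).
  exact D3. unfold dFa. fold s. field. lra.
Qed.

Lemma dFa_cont m cc r : 0 < m -> 0 < r -> continuity_pt (dFa m cc) r.
Proof.
  intros Hm Hr. assert (0 < 2 * r / m) by (apply Rdiv_lt_0_compat; lra).
  eapply cont_of_is_derive. unfold dFa, Wf, Nw, dWf. auto_derive.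
  - repeat split; try lra; auto; apply Rgt_not_eq; nra.
  - reflexivity.
Qed.

Lemma hfun_radial m cc G' r : 0 < m -> m / 2 <= r -> (forall x, derivable_pt_lim (Gt m cc) x (G' x)) ->
  hfun m (fun x y => Gt m cc (x * x + y * y)) (fun x y => G' (x * x + y * y) * (2 * x))
    (fun x y => G' (x * x + y * y) * (2 * y)) r
  = 2 * PI * (dFa m cc r - cc ^ 2 * (Vp m r * r)).
Proof.
  intros Hm Hr HG. unfold hfun.
  assert (E : forall t, Gi m (fun x y => Gt m cc (x * x + y * y)) (fun x y => G' (x * x + y * y) * (2 * x))
    (fun x y => G' (x * x + y * y) * (2 * y)) r t = (dWf (2 * r / m) * (2 / m)) ^ 2 - Vp m r * (Wf (2 * r / m) - cc) ^ 2).
  { intro t. unfold Gi, Pp.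
    replace (r * cos t * (r * cos t) + r * sin t * (r * sin t)) with (r * r).
    2:{ pose proof (sin2_cos2 t). unfold Rsqr in H. replace (r * r) with (r * r * 1) at 1 by ring. rewrite <- H. ring. }
    rewrite Gt_val by auto. rewrite <- (Gt_dval m cc r G') by auto.
    pose proof (sin2_cos2 t). unfold Rsqr in H.
    replace ((G' (r * r) * (2 * (r * cos t))) ^ 2 + (G' (r * r) * (2 * (r * sin t))) ^ 2)
      with ((G' (r * r) * (2 * r)) ^ 2 * (sin t * sin t + cos t * cos t)) by ring.
    rewrite H. ring. }
  rewrite (RInt_ext _ (fun _ => (dWf (2 * r / m) * (2 / m)) ^ 2 - Vp m r * (Wf (2 * r / m) - cc) ^ 2)) by (intros; apply E).
  rewrite RInt_const. unfold scal; simpl; unfold mult; simpl.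
  unfold dFa, Vp. set (s := 2 * r / m).
  replace r with (s * m / 2) by (unfold s; field; lra).
  assert (0 < s) by (unfold s; apply Rdiv_lt_0_compat; lra).
  field. repeat split; try lra. apply Rgt_not_eq; nra.
Qed.

Lemma instab m Rad : 0 < m -> m * sstar / 2 < Rad -> ~ stable m Rad.
Proof.
  intros Hm HR Hst. pose proof sstar_gt1 as Hss. pose proof PI_RGT_0 as HPI.
  assert (HRm : m / 2 < Rad) by nra.
  set (sR := 2 * Rad / m).
  assert (HsR : sstar < sR).
  { unfold sR. apply (Rmult_lt_reg_r m); auto. unfold Rdiv. rewrite Rmult_assoc, Rinv_l; lra. }
  set (cc := Wf sR).
  assert (Hcc : cc < 0) by (apply Wf_neg; auto).
  destruct (D1_Gt m cc 2 Hm) as [G' [HG HG1]].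
  assert (HG' : forall x, derivable_pt_lim (Gt m cc) x (G' x)) by (intro; apply HG; auto).
  assert (CG' : forall x, continuity_pt G' x) by (intro; apply (D1_cont 1 _ G' HG1); auto).
  set (u := fun x y => Gt m cc (x * x + y * y)).
  assert (Hsm : smooth2 u) by (apply smooth_radial; intro n; apply D1_Gt; auto).
  assert (Hz : forall x y, x ^ 2 + y ^ 2 = Rad ^ 2 -> u x y = 0).
  { intros x y Hxy. unfold u. replace (x * x + y * y) with (Rad * Rad) by (simpl in Hxy; lra).
    rewrite Gt_val by lra. fold sR. unfold cc. ring. }
  pose proof (Hst u Hsm Hz) as HQ.
  pose proof (Cdata_radial (Gt m cc) G' HG' CG') as HC.
  rewrite (Q_eq m Rad u _ _ Hm ltac:(lra) HC) in HQ.
  rewrite (RInt_ext _ (fun r => 2 * PI * dFa m cc r + (- (2 * PI * cc ^ 2)) * (Vp m r * r))) in HQ.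
  2:{ intros x Hx. rewrite Rmin_left, Rmax_right in Hx by lra. unfold u.
      rewrite hfun_radial by (auto; lra). match goal with |- ?a = ?b => change (@eq R a b) end. ring. }
  assert (Ed : ex_RInt (dFa m cc) (m / 2) Rad).
  { apply (@ex_RInt_continuous R_CompleteNormedModule). intros z Hz'. rewrite Rmin_left in Hz' by lra.
    apply continuity_pt_filterlim. apply dFa_cont; auto. lra. }
  assert (Ev : ex_RInt (fun r => Vp m r * r) (m / 2) Rad).
  { apply (@ex_RInt_continuous R_CompleteNormedModule). intros z Hz'. rewrite Rmin_left in Hz' by lra.
    apply continuity_pt_filterlim. apply (continuity_pt_mult (Vp m) (fun r => r)).
    apply Vp_cont; auto; lra. apply derivable_continuous_pt, derivable_pt_id. }
  rewrite RInt_plus_R in HQ by (apply ex_RInt_scal_R; auto).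
  rewrite !RInt_scal_R in HQ by auto.
  assert (EF : RInt (dFa m cc) (m / 2) Rad = Fa m cc Rad - Fa m cc (m / 2)).
  { apply is_RInt_unique. apply (is_RInt_derive (Fa m cc) (dFa m cc)).
    - intros x Hx. rewrite Rmin_left, Rmax_right in Hx by lra. apply is_derive_Reals. apply Fa_deriv; auto. lra.
    - intros x Hx. rewrite Rmin_left, Rmax_right in Hx by lra. apply continuity_pt_filterlim. apply dFa_cont; auto. lra. }
  assert (Fh : Fa m cc (m / 2) = 0).
  { unfold Fa. replace (2 * (m / 2) / m) with 1 by (field; lra). rewrite dWf_1. ring. }
  assert (FR : Fa m cc Rad < 0).
  { unfold Fa. fold sR. fold cc. pose proof (dWf_neg sR ltac:(lra)). 
    replace (sR * dWf sR * (cc - 2 * cc)) with (- (sR * (dWf sR * cc))) by ring.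
    assert (0 < dWf sR * cc) by nra. assert (0 < sR) by lra. nra. }
  assert (HI : 0 <= RInt (fun r => Vp m r * r) (m / 2) Rad).
  { apply RInt_ge_0; auto. lra. intros x Hx. unfold Vp. apply Rmult_le_pos; [|lra].
    apply Rdiv_le_0_compat; [lra|]. apply Rmult_lt_0_compat; [lra|]. apply pow_lt; lra. }
  rewrite EF, Fh in HQ.
  assert (0 <= 2 * PI * cc ^ 2 * RInt (fun r => Vp m r * r) (m / 2) Rad).
  { apply Rmult_le_pos; auto. apply Rmult_le_pos; [lra|apply pow2_ge_0]. }
  assert (2 * PI * (Fa m cc Rad - 0) < 0) by nra.
  lra.
Qed.

Lemma stab_dir m Rad : 0 < m -> m / 2 < Rad -> Rad <= m * sstar / 2 -> stable m Rad.
Proof.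
  intros Hm H1 H2 u Hs Hz.
  destruct (Hs 1%nat) as [Cu [fx [fy [Hx [Hy [Cx Cy]]]]]].
  assert (HC : Cdata u fx fy).
  { repeat split; auto; intros; apply c2d_of_cont2; auto. }
  rewrite (Q_eq m Rad u fx fy Hm ltac:(lra) HC).
  apply stab_RInt; auto.
Qed.

Theorem theorem1p2 (m : R) (hm : 0 < m) :
  exists Rs : R,
    (m / 2 < Rs /\ Rstar_eq m Rs) /\
    (forall R' : R, m / 2 < R' -> Rstar_eq m R' -> R' = Rs) /\
    (forall Rad : R, m / 2 < Rad -> (stable m Rad <-> Rad <= Rs)).
Proof.
  pose proof sstar_gt1 as Hss.
  exists (m * sstar / 2). split; [split|split].
  - nra.
  - apply Rstar_eq_psi; auto. nra. replace (2 * (m * sstar / 2) / m) with sstar by (field; lra).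
    apply psi_sstar.
  - intros R' HR' HE. apply Rstar_eq_psi in HE; auto.
    assert (1 < 2 * R' / m).
    { apply (Rmult_lt_reg_r m); auto. unfold Rdiv. rewrite Rmult_assoc, Rinv_l; lra. }
    pose proof (psi_root_unique _ H HE) as E.
    replace R' with (m * (2 * R' / m) / 2) by (field; lra). rewrite E. reflexivity.
  - intros Rad HRad. split.
    + intro Hst. destruct (Rle_dec Rad (m * sstar / 2)) as [Hle|Hgt]; auto.
      exfalso. apply (instab m Rad hm); auto. lra.
    + intro Hle. apply stab_dir; auto.
Qed.
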